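(* Assume (I), that $f(\cdot,i,\mathbf q)$ is $C^1$ on $[0,\infty)$ for all $i\in S$, $\mathbf q\in D_i$, that $f_t:=\partial_t f$ also satisfies (I), and that condition (R) holds. Then for any $i\in S$ and $Q,Q^*\in\mathcal Q$, as $\varepsilon\downarrow0$, $$F(i,Q^* )-F(i,Q\otimes_\varepsilon Q^* )=\big(\Gamma^{Q^*}_i(Q^*_i)-\Gamma^{Q^*}_i(Q_i)\big)\varepsilon+\tfrac12\big(\Lambda^{Q^*}(i,Q^* )-\Lambda^{Q^*}(i,Q)\big)\varepsilon^2+o(\varepsilon^2).$$
   Context: Let $S=\{1,\dots,N\}$, $N\in\mathbb N$. For $i\in S$ let $E_i=\{q\in\mathbb R^N: q_j\ge0\text{ for }j\ne i,\ q_i=-\sum_{j\ne i}q_j\}$ and $D_i\subseteq E_i$ given; $\mathcal Q=\{Q\in\mathbb R^{N\times N}: Q_i\in D_i\ \forall i\}$, $Q_i$ the $i$-th row. For $Q\in\mathcal Q$, $X$ is a time-homogeneous continuous-time Markov chain on $S$ with generator $Q$, $\mathbb E_{i,Q}$ the expectation given $X_0=i$. A payoff function $f$ assigns $f(t,i,\mathbf q)\in\mathbb R$ to $t\ge0,i\in S,\mathbf q\in D_i$. Condition (I) for a function $g$ of $(t,i,\mathbf q)$: $\int_0^\infty\sup_{i\in S,\mathbf q\in D_i,\|\mathbf q\|\le c}|g(t,i,\mathbf q)|dt<\infty$ for all $c>0$. Condition (R): there is a function $r(t,\varepsilon;i,\mathbf q)$, continuous in $\varepsilon$, with $|f(t+\varepsilon,i,\mathbf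 q)-f(t,i,\mathbf q)-\varepsilon f_t(t,i,\mathbf q)|\le r(t,\varepsilon;i,\mathbf q)$ for all $t\ge0,\varepsilon>0,i,\mathbf q$, such that $\int_0^\infty r(t,\varepsilon;i,\mathbf q)dt<\infty$ for all sufficiently small $\varepsilon>0$ and $\varepsilon\mapsto r(t,\varepsilon;i,\mathbf q)/\varepsilon$ is nondecreasing for every $(t,i,\mathbf q)$. Define $F(i,Q)=\mathbb E_{i,Q}[\int_0^\infty f(t,X_t,Q_{X_t})dt]$, $G(i,Q)=\mathbb E_{i,Q}[\int_0^\infty f_t(t,X_t,Q_{X_t})dt]$, $F(Q)=(F(1,Q),\dots,F(N,Q))$, $G(Q)=(G(1,Q),\dots,G(N,Q))$. $Q\otimes_\varepsilon Q'$: $X$ evolves with generator $Q$ on $[0,\varepsilon]$ and $Q'$ on $(\varepsilon,\infty)$; $F(i,Q\otimes_\varepsilon Q')$ is the corresponding expected payoff $\mathbb E_i[\int_0^\varepsilon f(t,X_t,Q_{X_t})dt+\int_\varepsilon^\infty f(t,X_t,Q'_{X_t})dt]$. For $Q^*\in\mathcal Q$: $\Gamma^{Q^*}_i(\mathbf q)=f(0,i,\mathbf q)+\mathbf q\cdot F(Q^* )$ for $\mathbf q\in D_i$; $\Gamma^{Q^*}(Q)=(\Gamma^{Q^*}_1(Q_1),\dots,\Gamma^{Q^*}_N(Q_N))$; $\Lambda^{Q^*}(i,Q)=f_t(0,i,Q_i)+Q_i\cdot\big(2G(Q^* )+\Gamma^{Q^*}(Q)\big)$. *)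

(* Defs.v *)
From Stdlib Require Import Reals Lra List ClassicalEpsilon.
Import ListNotations.
Open Scope R_scope.

(* States are 0..N-1 (S = {1..N} shifted); vectors are nat -> R, matrices nat -> nat -> R. *)
Definition sumN (N : nat) (g : nat -> R) : R := fold_right Rplus 0 (map g (seq 0 N)).
Definition dot (N : nat) (u v : nat -> R) : R := sumN N (fun j => u j * v j).
(* l1 norm on R^N (any norm gives the same condition (I)) *)
Definition normN (N : nat) (q : nat -> R) : R := sumN N (fun j => Rabs (q j)).

(* E_i : row of a conservative generator (coordinates >= N are zero) *)
Definition inE (N i : nat) (q : nat -> R) : Prop :=
  (forall j, (j < N)%nat -> j <> i -> 0 <= q j) /\
  q i = - sumN N (fun j => if Nat.eqb j i then 0 else q j) /\
  (forall j, (N <= j)%nat -> q j = 0).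

Definition inQ (N : nat) (D : nat -> (nat -> R) -> Prop) (Q : nat -> nat -> R) : Prop :=
  forall i, (i < N)%nat -> D i (Q i).

(* Transition function of the continuous-time Markov chain with generator Q:
   P(0) = I and the Kolmogorov backward equation P'(t) = Q P(t)
   (its unique solution is exp(tQ)); P t i j = P_i(X_t = j). *)
Definition is_trans (N : nat) (Q : nat -> nat -> R) (P : R -> nat -> nat -> R) : Prop :=
  (forall i j, (i < N)%nat -> (j < N)%nat -> P 0 i j = if Nat.eqb i j then 1 else 0) /\
  (forall i j t, (i < N)%nat -> (j < N)%nat ->
     derivable_pt_lim (fun s => P s i j) t (sumN N (fun k => Q i k * P t k j))).

Definition trans (N : nat) (Q : nat -> nat -> R) : R -> nat -> nat -> R :=
  epsilon (inhabits (fun _ _ _ => 0)) (is_trans N Q).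

Definition int0inf (h : R -> R) : R :=
  epsilon (inhabits 0) (fun l => forall eta, 0 < eta -> exists B, forall b, B <= b ->
     exists pr : Riemann_integrable h 0 b, Rabs (RiemannInt pr - l) < eta).

(* Lebesgue outer measure of A is <= m (covers by open intervals) *)
Definition outer_le (A : R -> Prop) (m : R) : Prop :=
  forall eta, 0 < eta -> exists a b : nat -> R,
    (forall n, a n <= b n) /\
    (forall x, A x -> exists n, a n < x < b n) /\
    (forall K, sum_f_R0 (fun n => b n - a n) K <= m + eta).

(* For a nonnegative function h on [0,oo), given through its strict
   superlevel relation  Sup t y  <->  h t > y,  "int_0^oo h dt < oo"
   via the layer-cake formula  int h = int_0^oo |{t >= 0 : h t > y}| dy
   (the y-integrand is nonincreasing, so its integral is the supremum of
   its right-endpoint Riemann sums). *)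
Definition finite_integral (Sup : R -> R -> Prop) : Prop :=
  exists M, forall delta, 0 < delta -> forall n : nat,
    exists ms : nat -> R,
      (forall k, (k < n)%nat ->
         outer_le (fun t => 0 <= t /\ Sup t (INR (S k) * delta)) (ms k)) /\
      delta * sumN n ms <= M.

Definition condI (N : nat) (D : nat -> (nat -> R) -> Prop)
  (g : R -> nat -> (nat -> R) -> R) : Prop :=
  forall c, 0 < c -> finite_integral (fun t y =>
     exists i q, (i < N)%nat /\ D i q /\ normN N q <= c /\ y < Rabs (g t i q)).

Definition C1_nonneg (g g' : R -> R) : Prop :=
  (forall t, 0 <= t -> forall eta, 0 < eta -> exists delta, 0 < delta /\
     forall h, h <> 0 -> Rabs h < delta -> 0 <= t + h ->
       Rabs ((g (t + h) - g t) / h - g' t) < eta) /\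
  (forall t, 0 <= t -> forall eta, 0 < eta -> exists delta, 0 < delta /\
     forall s, 0 <= s -> Rabs (s - t) < delta -> Rabs (g' s - g' t) < eta).

Definition condR (N : nat) (D : nat -> (nat -> R) -> Prop)
  (f ft : R -> nat -> (nat -> R) -> R) : Prop :=
  exists r : R -> R -> nat -> (nat -> R) -> R,
    (forall t i q e, 0 <= t -> (i < N)%nat -> D i q -> 0 < e ->
       continuity_pt (fun e' => r t e' i q) e) /\
    (forall t i q e, 0 <= t -> (i < N)%nat -> D i q -> 0 < e ->
       Rabs (f (t + e) i q - f t i q - e * ft t i q) <= r t e i q) /\
    (forall i q, (i < N)%nat -> D i q -> exists e0, 0 < e0 /\
       forall e, 0 < e < e0 -> finite_integral (fun t y => y < r t e i q)) /\
    (forall t i q e1 e2, 0 <= t -> (i < N)%nat -> D i q -> 0 < e1 <= e2 ->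
       r t e1 i q / e1 <= r t e2 i q / e2).

(* F(i,Q), G(i,Q): E_i int_0^oo f(t,X_t,Q_{X_t}) dt, computed via P_i(X_t = j) *)
Definition Fval (N : nat) (f : R -> nat -> (nat -> R) -> R) (Q : nat -> nat -> R) (i : nat) : R :=
  int0inf (fun t => sumN N (fun j => trans N Q t i j * f t j (Q j))).

(* F(i, Q (x)_eps Q'): generator Q on [0,eps], Q' afterwards (Markov property) *)
Definition Fconcat (N : nat) (f : R -> nat -> (nat -> R) -> R)
  (Q Q' : nat -> nat -> R) (eps : R) (i : nat) : R :=
  int0inf (fun t =>
    if Rle_dec t eps then sumN N (fun j => trans N Q t i j * f t j (Q j))
    else sumN N (fun j =>
           sumN N (fun k => trans N Q eps i k * trans N Q' (t - eps) k j) * f t j (Q' j))).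

Definition Gam (N : nat) (f : R -> nat -> (nat -> R) -> R) (Qs : nat -> nat -> R)
  (i : nat) (q : nat -> R) : R :=
  f 0 i q + dot N q (fun j => Fval N f Qs j).

(* Lambda^{Qs}(i,Q); G(Qs) = Fval with f_t *)
Definition Lam (N : nat) (f ft : R -> nat -> (nat -> R) -> R) (Qs : nat -> nat -> R)
  (i : nat) (Q : nat -> nat -> R) : R :=
  ft 0 i (Q i) + dot N (Q i) (fun j => 2 * Fval N ft Qs j + Gam N f Qs j (Q j)).

(* Main.v *)
Require Import Defs.
From Stdlib Require Import Reals Lra Lia List ClassicalEpsilon.
From Coquelicot Require Import Coquelicot.
Import ListNotations.
Open Scope R_scope.

Lemma sumN_0 g : sumN 0 g = 0.
Proof. reflexivity. Qed.

Lemma sumN_S n g : sumN (S n) g = sumN n g + g n.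
Proof.
  unfold sumN. rewrite seq_S, map_app, fold_right_app. simpl.
  generalize (map g (seq 0 n)). intro l. induction l as [|a l IH]; simpl; [lra|].
  rewrite IH. lra.
Qed.

Lemma sumN_ext n g h : (forall k, (k < n)%nat -> g k = h k) -> sumN n g = sumN n h.
Proof.
  induction n; intros H; [reflexivity|]. rewrite !sumN_S, IHn by (intros; apply H; lia).
  rewrite H by lia. reflexivity.
Qed.

Lemma sumN_plus n g h : sumN n (fun k => g k + h k) = sumN n g + sumN n h.
Proof. induction n; [simpl; unfold sumN; simpl; lra|]. rewrite !sumN_S, IHn. lra. Qed.

Lemma sumN_minus n g h : sumN n (fun k => g k - h k) = sumN n g - sumN n h.
Proof. induction n; [unfold sumN; simpl; lra|]. rewrite !sumN_S, IHn. lra. Qed.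

Lemma sumN_scal n c g : sumN n (fun k => c * g k) = c * sumN n g.
Proof. induction n; [unfold sumN; simpl; lra|]. rewrite !sumN_S, IHn. lra. Qed.

Lemma sumN_scal_r n c g : sumN n (fun k => g k * c) = sumN n g * c.
Proof. induction n; [unfold sumN; simpl; lra|]. rewrite !sumN_S, IHn. lra. Qed.

Lemma sumN_zero n : sumN n (fun _ => 0) = 0.
Proof. induction n; [reflexivity|]. rewrite sumN_S, IHn. lra. Qed.

Lemma sumN_swap n m (x : nat -> nat -> R) :
  sumN n (fun a => sumN m (fun b => x a b)) = sumN m (fun b => sumN n (fun a => x a b)).
Proof.
  induction n.
  - rewrite sumN_0. symmetry. apply sumN_zero.
  - rewrite sumN_S, IHn, <- sumN_plus. apply sumN_ext. intros. rewrite sumN_S. reflexivity.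
Qed.

Lemma sumN_le n g h : (forall k, (k < n)%nat -> g k <= h k) -> sumN n g <= sumN n h.
Proof.
  induction n; intros H; [unfold sumN; simpl; lra|]. rewrite !sumN_S.
  assert (g n <= h n) by (apply H; lia). assert (sumN n g <= sumN n h) by (apply IHn; intros; apply H; lia). lra.
Qed.

Lemma sumN_abs n g : Rabs (sumN n g) <= sumN n (fun k => Rabs (g k)).
Proof.
  induction n; [unfold sumN; simpl; rewrite Rabs_R0; lra|]. rewrite !sumN_S.
  eapply Rle_trans; [apply Rabs_triang|]. lra.
Qed.

Lemma sumN_nonneg n g : (forall k, (k < n)%nat -> 0 <= g k) -> 0 <= sumN n g.
Proof. intros H. rewrite <- (sumN_zero n). apply sumN_le. auto. Qed.

Lemma sumN_delta n i x : (i < n)%nat ->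
  sumN n (fun k => (if Nat.eqb i k then 1 else 0) * x k) = x i.
Proof.
  induction n; intros H; [lia|]. rewrite sumN_S.
  destruct (Nat.eq_dec i n) as [->|Hne].
  - rewrite Nat.eqb_refl. rewrite (sumN_ext n _ (fun _ => 0)). rewrite sumN_zero. lra.
    intros k Hk. destruct (Nat.eqb_spec n k); [lia|]. lra.
  - rewrite IHn by lia. destruct (Nat.eqb_spec i n); [lia|]. lra.
Qed.

Lemma sumN_delta' n i x : (i < n)%nat ->
  sumN n (fun k => x k * (if Nat.eqb k i then 1 else 0)) = x i.
Proof.
  intros H. rewrite <- (sumN_delta n i x H). apply sumN_ext. intros k _.
  destruct (Nat.eqb_spec k i), (Nat.eqb_spec i k); subst; try lia; lra.
Qed.

Lemma sumN_le_sum_abs n g k : (k < n)%nat -> Rabs (g k) <= sumN n (fun j => Rabs (g j)).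
Proof.
  induction n; intros H; [lia|]. rewrite sumN_S.
  assert (0 <= sumN n (fun j => Rabs (g j))) by (apply sumN_nonneg; intros; apply Rabs_pos).
  destruct (Nat.eq_dec k n) as [->|]; [lra|]. assert (Rabs (g k) <= sumN n (fun j => Rabs (g j))) by (apply IHn; lia).
  pose proof (Rabs_pos (g n)). lra.
Qed.
Ltac Rring := match goal with |- ?a = ?b => change (@eq R a b) end; cbv beta; ring.
Ltac Rfield := match goal with |- ?a = ?b => change (@eq R a b) end; cbv beta; field.
Lemma Dplus (f g : R -> R) x df dg : is_derive f x df -> is_derive g x dg ->
  is_derive (fun t => f t + g t) x (df + dg).
Proof. intros. apply (is_derive_plus f g x df dg); auto. Qed.
Lemma Dminus (f g : R -> R) x df dg : is_derive f x df -> is_derive g x dg ->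
  is_derive (fun t => f t - g t) x (df - dg).
Proof. intros. apply (is_derive_minus f g x df dg); auto. Qed.
Lemma Dmult (f g : R -> R) x df dg : is_derive f x df -> is_derive g x dg ->
  is_derive (fun t => f t * g t) x (df * g x + f x * dg).
Proof. intros. apply (is_derive_mult f g x df dg); auto. intros; apply Rmult_comm. Qed.
Lemma Dscal (f : R -> R) x c df : is_derive f x df -> is_derive (fun t => c * f t) x (c * df).
Proof. apply is_derive_scal. Qed.
Lemma Dconst (c x : R) : is_derive (fun _ => c) x 0.
Proof. apply (is_derive_const c x). Qed.
Lemma Did (x : R) : is_derive (fun t => t) x 1.
Proof. apply (is_derive_id x). Qed.
Lemma Dcomp (f g : R -> R) x df dg : is_derive f (g x) df -> is_derive g x dg ->
  is_derive (fun t => f (g t)) x (dg * df).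
Proof. intros. apply (is_derive_comp f g x df dg); auto. Qed.
Lemma Dext (f g : R -> R) x l l' : (forall t, f t = g t) -> l = l' -> is_derive f x l -> is_derive g x l'.
Proof. intros H -> . apply is_derive_ext. auto. Qed.

Lemma D_sumN n (F dF : nat -> R -> R) x :
  (forall k, (k < n)%nat -> is_derive (F k) x (dF k x)) ->
  is_derive (fun t => sumN n (fun k => F k t)) x (sumN n (fun k => dF k x)).
Proof.
  induction n; intros H.
  - eapply Dext; [| |apply (Dconst 0)]; intros; reflexivity.
  - eapply Dext; [intros; symmetry; apply sumN_S| symmetry; apply sumN_S|].
    apply Dplus; [apply IHn; intros; apply H; lia| apply H; lia].
Qed.

Lemma D_cont (f : R -> R) x l : is_derive f x l -> continuous f x.
Proof. intros H. apply (ex_derive_continuous (K:=R_AbsRing) (V:=R_NormedModule)). exists l. exact H. Qed.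

Lemma D_contpt (f : R -> R) x l : is_derive f x l -> continuity_pt f x.
Proof. intros H. apply continuity_pt_filterlim. exact (D_cont f x l H). Qed.

Lemma C_sumN n (F : nat -> R -> R) x :
  (forall k, (k < n)%nat -> continuous (F k) x) ->
  continuous (fun t => sumN n (fun k => F k t)) x.
Proof.
  induction n; intros H.
  - apply (continuous_ext (fun _ => 0)); [intros; reflexivity| apply continuous_const].
  - eapply continuous_ext; [intros; symmetry; apply sumN_S|].
    apply (continuous_plus (fun t => sumN n (fun k => F k t)) (F n)); [apply IHn; intros; apply H; lia|apply H; lia].
Qed.

Lemma C_mult (f g : R -> R) x : continuous f x -> continuous g x -> continuous (fun t => f t * g t) x.
Proof. intros. apply (continuous_mult f g); auto. Qed.
Lemma C_plus (f g : R -> R) x : continuous f x -> continuous g x -> continuous (fun t => f t + g t) x.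
Proof. intros. apply (continuous_plus f g); auto. Qed.
Lemma C_opp (f : R -> R) x : continuous f x -> continuous (fun t => - f t) x.
Proof. intros. apply (continuous_opp f); auto. Qed.
Lemma C_minus (f g : R -> R) x : continuous f x -> continuous g x -> continuous (fun t => f t - g t) x.
Proof. intros. apply (continuous_minus f g); auto. Qed.
Lemma C_const (c x : R) : continuous (fun _ => c) x.
Proof. apply continuous_const. Qed.
Lemma C_id (x : R) : continuous (fun t => t) x.
Proof. apply continuous_id. Qed.
Lemma C_abs (f : R -> R) x : continuous f x -> continuous (fun t => Rabs (f t)) x.
Proof. intros. apply (continuous_comp f Rabs); auto. apply continuous_Rabs. Qed.

Lemma RInt_plusR (f g : R -> R) a b : ex_RInt f a b -> ex_RInt g a b ->
  RInt (fun t => f t + g t) a b = RInt f a b + RInt g a b.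
Proof. intros. apply (RInt_plus f g); auto. Qed.
Lemma RInt_minusR (f g : R -> R) a b : ex_RInt f a b -> ex_RInt g a b ->
  RInt (fun t => f t - g t) a b = RInt f a b - RInt g a b.
Proof. intros. apply (RInt_minus f g); auto. Qed.
Lemma RInt_scalR (f : R -> R) a b c : ex_RInt f a b ->
  RInt (fun t => c * f t) a b = c * RInt f a b.
Proof. intros. apply (RInt_scal f); auto. Qed.
Lemma RInt_constR a b (c : R) : RInt (fun _ => c) a b = (b - a) * c.
Proof. exact (RInt_const (V:=R_CompleteNormedModule) a b c). Qed.
Lemma ex_RInt_plusR (f g : R -> R) a b : ex_RInt f a b -> ex_RInt g a b -> ex_RInt (fun t => f t + g t) a b.
Proof. intros. apply (ex_RInt_plus f g); auto. Qed.
Lemma ex_RInt_minusR (f g : R -> R) a b : ex_RInt f a b -> ex_RInt g a b -> ex_RInt (fun t => f t - g t) a b.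
Proof. intros. apply (ex_RInt_minus f g); auto. Qed.
Lemma ex_RInt_scalR (f : R -> R) a b c : ex_RInt f a b -> ex_RInt (fun t => c * f t) a b.
Proof. intros. apply (ex_RInt_scal f); auto. Qed.
Lemma RInt_ChaslesR (f : R -> R) a b c : ex_RInt f a b -> ex_RInt f b c -> RInt f a b + RInt f b c = RInt f a c.
Proof. intros. apply (RInt_Chasles f); auto. Qed.

Lemma ex_RInt_sumN n (F : nat -> R -> R) a b :
  (forall k, (k < n)%nat -> ex_RInt (F k) a b) -> ex_RInt (fun t => sumN n (fun k => F k t)) a b.
Proof.
  induction n; intros H.
  - apply (ex_RInt_ext (fun _ => 0)); [intros; reflexivity| apply (ex_RInt_const a b 0)].
  - eapply ex_RInt_ext; [intros; symmetry; apply sumN_S|].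
    apply ex_RInt_plusR; [apply IHn; intros; apply H; lia| apply H; lia].
Qed.

Lemma RInt_sumN n (F : nat -> R -> R) a b :
  (forall k, (k < n)%nat -> ex_RInt (F k) a b) ->
  RInt (fun t => sumN n (fun k => F k t)) a b = sumN n (fun k => RInt (F k) a b).
Proof.
  induction n; intros H.
  - rewrite sumN_0. rewrite (RInt_ext _ (fun _ => 0)) by (intros; reflexivity). rewrite RInt_constR. lra.
  - rewrite (RInt_ext _ (fun t => sumN n (fun k => F k t) + F n t)) by (intros; apply sumN_S).
    rewrite RInt_plusR, IHn, sumN_S; auto. apply ex_RInt_sumN; intros; apply H; lia.
Qed.

Lemma ex_RInt_cont (f : R -> R) a b : (forall x, continuous f x) -> ex_RInt f a b.
Proof. intros H. apply (ex_RInt_continuous (V:=R_CompleteNormedModule)). intros; apply H. Qed.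

Lemma RInt_leR (f g : R -> R) a b : a <= b -> ex_RInt f a b -> ex_RInt g a b ->
  (forall x, a <= x <= b -> f x <= g x) -> RInt f a b <= RInt g a b.
Proof. intros. apply RInt_le; auto. intros; apply H2; lra. Qed.

Lemma RInt_ge0 (f : R -> R) a b : a <= b -> ex_RInt f a b -> (forall x, a <= x <= b -> 0 <= f x) -> 0 <= RInt f a b.
Proof.
  intros. replace 0 with (RInt (fun _ => 0) a b) by (rewrite RInt_constR; lra).
  apply RInt_leR; auto. apply ex_RInt_const.
Qed.

Lemma RInt_abs_le (f : R -> R) a b : a <= b -> ex_RInt f a b -> Rabs (RInt f a b) <= RInt (fun t => Rabs (f t)) a b.
Proof. apply abs_RInt_le. Qed.

Lemma RInt_bound (f : R -> R) a b M : a <= b -> ex_RInt f a b -> (forall t, a <= t <= b -> Rabs (f t) <= M) ->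
  Rabs (RInt f a b) <= (b - a) * M.
Proof. apply abs_RInt_le_const. Qed.

Lemma Dlin (c x : R) : is_derive (fun s => c * s) x c.
Proof. eapply Dext; [intros; reflexivity| |apply (Dscal (fun s => s) x c 1 (Did x))]. apply Rmult_1_r. Qed.
Lemma Dneg (x : R) : is_derive (fun s => - s) x (-1).
Proof. apply (Dext (fun s => -1 * s) _ x (-1) (-1)); [intros; ring|reflexivity|apply Dlin]. Qed.
Lemma term_le_sum n (g : nat -> R) k : (forall j, (j < n)%nat -> 0 <= g j) -> (k < n)%nat -> g k <= sumN n g.
Proof.
  intros H Hk. pose proof (sumN_le_sum_abs n g k Hk).
  rewrite (sumN_ext n (fun j => Rabs (g j)) g) in H0 by (intros; apply Rabs_pos_eq; auto).
  rewrite Rabs_pos_eq in H0 by (apply H; auto). exact H0.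
Qed.

Lemma MVT_le (v dv : R -> R) t : 0 <= t -> (forall s, is_derive v s (dv s)) -> (forall s, 0 <= s <= t -> dv s <= 0) ->
  v t <= v 0.
Proof.
  intros Ht Hd Hneg.
  destruct (MVT_gen v 0 t dv) as [c [Hc Heq]].
  - intros; apply Hd.
  - intros; eapply D_contpt; apply Hd.
  - rewrite Rmin_left in Hc by lra. rewrite Rmax_right in Hc by lra.
    assert (dv c <= 0) by (apply Hneg; lra). nra.
Qed.

Lemma ode_uniq_fwd (N : nat) (K : nat -> nat -> R) (x : R -> nat -> R) :
  (forall k t, (k < N)%nat -> is_derive (fun s => x s k) t (sumN N (fun m => K k m * x t m))) ->
  (forall k, (k < N)%nat -> x 0 k = 0) -> forall t, 0 <= t -> forall k, (k < N)%nat -> x t k = 0.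
Proof.
  intros Hd H0 t Ht k Hk.
  set (L := sumN N (fun a => sumN N (fun b => Rabs (K a b)))).
  set (d := fun t k => sumN N (fun m => K k m * x t m)).
  set (u := fun t => sumN N (fun k => x t k * x t k)).
  set (du := fun t => sumN N (fun k => d t k * x t k + x t k * d t k)).
  assert (Hu : forall s, is_derive u s (du s)).
  { intros s. unfold u, du. apply (D_sumN N (fun k t => x t k * x t k) (fun k s => d s k * x s k + x s k * d s k)).
    intros j Hj. apply Dmult; apply Hd; auto. }
  assert (Hupos : forall s j, (j < N)%nat -> x s j * x s j <= u s).
  { intros s j Hj. unfold u. apply (term_le_sum N (fun k => x s k * x s k)); auto. intros; nra. }
  assert (Hbound : forall s, du s <= 2 * L * u s).
  { intros s. unfold du, d, L.
    rewrite (sumN_ext N _ (fun k => sumN N (fun m => 2 * (K k m * x s k * x s m)))).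
    2:{ intros j Hj. rewrite <- sumN_scal. rewrite <- !sumN_scal_r.
        rewrite <- (sumN_plus). apply sumN_ext. intros; ring. }
    rewrite <- sumN_scal, <- sumN_scal_r. apply sumN_le. intros a Ha.
    rewrite <- sumN_scal, <- sumN_scal_r. apply sumN_le. intros b Hb.
    pose proof (Hupos s a Ha). pose proof (Hupos s b Hb).
    assert (Rabs (x s a * x s b) <= u s).
    { rewrite Rabs_mult. assert (0 <= Rabs (x s a)) by apply Rabs_pos. assert (0 <= Rabs (x s b)) by apply Rabs_pos.
      assert (Rabs (x s a) * Rabs (x s a) = x s a * x s a) by (rewrite <- Rabs_mult; apply Rabs_pos_eq; nra).
      assert (Rabs (x s b) * Rabs (x s b) = x s b * x s b) by (rewrite <- Rabs_mult; apply Rabs_pos_eq; nra).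
      nra. }
    assert (K a b * x s a * x s b <= Rabs (K a b) * u s).
    { rewrite Rmult_assoc. eapply Rle_trans; [apply Rle_abs|]. rewrite Rabs_mult.
      apply Rmult_le_compat_l; auto. apply Rabs_pos. }
    lra. }
  set (v := fun s => u s * exp (- (2 * L) * s)).
  set (dv := fun s => du s * exp (- (2 * L) * s) + u s * (- (2 * L) * exp (- (2 * L) * s))).
  assert (Hv : forall s, is_derive v s (dv s)).
  { intros s. unfold v, dv. apply (Dmult u (fun s => exp (- (2 * L) * s)) s (du s) (- (2 * L) * exp (- (2 * L) * s))); auto.
    eapply Dext; [intros; reflexivity| |apply (Dcomp exp (fun s => - (2 * L) * s) s (exp (- (2 * L) * s)) (- (2 * L)))].
    - reflexivity.
    - apply is_derive_exp.
    - apply Dlin. }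
  assert (Hle : v t <= v 0).
  { apply (MVT_le v dv t Ht Hv). intros s _. unfold dv. pose proof (Hbound s). pose proof (exp_pos (- (2 * L) * s)). nra. }
  assert (Hu0 : u 0 = 0). { unfold u. rewrite (sumN_ext N _ (fun _ => 0)). apply sumN_zero. intros; rewrite H0; auto; ring. }
  unfold v in Hle. rewrite Hu0 in Hle. pose proof (exp_pos (- (2 * L) * t)). pose proof (Hupos t k Hk).
  assert (u t <= 0) by nra. nra.
Qed.

Lemma ode_uniq (N : nat) (K : nat -> nat -> R) (x : R -> nat -> R) :
  (forall k t, (k < N)%nat -> is_derive (fun s => x s k) t (sumN N (fun m => K k m * x t m))) ->
  (forall k, (k < N)%nat -> x 0 k = 0) -> forall t k, (k < N)%nat -> x t k = 0.
Proof.
  intros Hd H0 t k Hk. destruct (Rle_dec 0 t) as [Ht|Ht].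
  - eapply ode_uniq_fwd; eauto.
  - replace t with (- (- t)) by ring.
    apply (ode_uniq_fwd N (fun a b => - K a b) (fun s j => x (- s) j)); auto; try lra.
    + intros j s Hj. eapply Dext; [intros; reflexivity| |apply (Dcomp (fun s => x s j) (fun s => - s) s (sumN N (fun m => K j m * x (- s) m)) (-1))].
      3:{ apply Dneg. }
      2:{ apply Hd; auto. }
      rewrite <- sumN_scal. apply sumN_ext. intros; ring.
    + intros j Hj. replace (- 0) with 0 by ring. auto.
Qed.
Fixpoint mpow (N : nat) (A : nat -> nat -> R) (n : nat) : nat -> nat -> R :=
  match n with
  | O => fun i j => if Nat.eqb i j then 1 else 0
  | S n => fun i j => sumN N (fun k => A i k * mpow N A n k j)
  end.

Definition mcoef N A i j (n : nat) : R := mpow N A n i j / INR (Factorial.fact n).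

Lemma mpow_bound N A Kc : (forall a, (a < N)%nat -> sumN N (fun b => Rabs (A a b)) <= Kc) -> 1 <= Kc ->
  forall n i j, (i < N)%nat -> Rabs (mpow N A n i j) <= Kc ^ n.
Proof.
  intros HK HK1 n. induction n; intros i j Hi; simpl.
  - destruct (Nat.eqb i j); rewrite ?Rabs_R1, ?Rabs_R0; lra.
  - eapply Rle_trans; [apply sumN_abs|].
    apply Rle_trans with (sumN N (fun k => Rabs (A i k) * Kc ^ n)).
    + apply sumN_le. intros k Hk. rewrite Rabs_mult. apply Rmult_le_compat_l; [apply Rabs_pos|]. auto.
    + rewrite sumN_scal_r. apply Rmult_le_compat_r; [apply pow_le; lra|]. auto.
Qed.

Lemma series_exp_ex (y : R) : ex_series (fun n => y ^ n * / INR (Factorial.fact n)).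
Proof.
  exists (exp y). pose proof (is_exp_Reals y) as H. unfold is_pseries in H.
  eapply is_series_ext; [|exact H]. intros n. simpl. rewrite pow_n_pow. reflexivity.
Qed.

Lemma radius_inf (a : nat -> R) Kc : 0 <= Kc -> (forall n, Rabs (a n) <= Kc ^ n / INR (Factorial.fact n)) ->
  forall x, Rbar_lt (Rabs x) (CV_radius a).
Proof.
  intros HK Ha x.
  assert (Hd : CV_disk a (Rabs x + 1)).
  { unfold CV_disk. apply (ex_series_le (K:=R_AbsRing) (V:=R_CompleteNormedModule)) with (b := fun n => (Kc * (Rabs x + 1)) ^ n * / INR (Factorial.fact n)).
    2: apply series_exp_ex.
    intros n. change (norm (Rabs (a n * (Rabs x + 1) ^ n))) with (Rabs (Rabs (a n * (Rabs x + 1) ^ n))).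
    rewrite Rabs_Rabsolu, Rabs_mult, Rpow_mult_distr.
    rewrite (Rabs_pos_eq ((Rabs x + 1) ^ n)) by (apply pow_le; pose proof (Rabs_pos x); lra).
    specialize (Ha n). pose proof (pow_le (Rabs x + 1) n). assert (0 <= Rabs x + 1) by (pose proof (Rabs_pos x); lra).
    unfold Rdiv in Ha. nra. }
  destruct (Lub_Rbar_correct (CV_disk a)) as [Hub _].
  specialize (Hub _ Hd). unfold CV_radius. destruct (Lub_Rbar (CV_disk a)); simpl in *; auto; lra.
Qed.

Lemma PSeries_sumN n (c : nat -> R) (a : nat -> nat -> R) x :
  (forall k, (k < n)%nat -> Rbar_lt (Rabs x) (CV_radius (a k))) ->
  ex_pseries (fun m => sumN n (fun k => c k * a k m)) x /\
  PSeries (fun m => sumN n (fun k => c k * a k m)) x = sumN n (fun k => c k * PSeries (a k) x).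
Proof.
  induction n; intros H.
  - split.
    + destruct (series_exp_ex x) as [l Hl]. exists (0 * l).
      pose proof (is_series_scal_l (K:=R_AbsRing) (V:=R_NormedModule) 0 _ l Hl) as H2.
      eapply is_series_ext; [|exact H2]. intros m. simpl.
      change (0 * (x ^ m * / INR (Factorial.fact m)) = pow_n x m * 0). ring.
    + rewrite sumN_0. unfold PSeries. rewrite (Series_ext _ (fun k => 0 * (0 * x ^ k))).
      rewrite Series_scal_l. ring. intros; rewrite sumN_0; ring.
  - destruct IHn as [He Heq]. { intros; apply H; lia. }
    assert (Hn : ex_pseries (a n) x) by (apply CV_radius_inside; apply H; lia).
    assert (He2 : ex_pseries (PS_scal (c n) (a n)) x) by (apply ex_pseries_scal; auto; apply Rmult_comm).
    split.
    + eapply ex_series_ext; [|apply (ex_pseries_plus _ _ x He He2)]. intros m. simpl.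
      unfold PS_plus, PS_scal. rewrite sumN_S. reflexivity.
    + rewrite (PSeries_ext _ (PS_plus (fun m => sumN n (fun k => c k * a k m)) (PS_scal (c n) (a n)))).
      * rewrite PSeries_plus; auto. rewrite PSeries_scal, Heq, sumN_S. reflexivity.
      * intros m. unfold PS_plus, PS_scal. rewrite sumN_S. reflexivity.
Qed.
Definition genQ (N : nat) (Q : nat -> nat -> R) : Prop :=
  (forall i j, (i < N)%nat -> (j < N)%nat -> i <> j -> 0 <= Q i j) /\
  (forall i, (i < N)%nat -> sumN N (fun j => Q i j) = 0).

Lemma inE_gen N Q : (forall i, (i < N)%nat -> inE N i (Q i)) -> genQ N Q.
Proof.
  intros H. split.
  - intros i j Hi Hj Hne. destruct (H i Hi) as [H1 _]. apply H1; auto.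
  - intros i Hi. destruct (H i Hi) as [_ [H2 _]].
    rewrite (sumN_ext N _ (fun j => (Q i j * (if Nat.eqb j i then 1 else 0)) + (if Nat.eqb j i then 0 else Q i j))).
    + rewrite sumN_plus, sumN_delta' by auto. lra.
    + intros j _. destruct (Nat.eqb j i); ring.
Qed.

Definition cst N (Q : nat -> nat -> R) := sumN N (fun a => sumN N (fun b => Rabs (Q a b))).
Definition Ash N Q i k := Q i k + (if Nat.eqb i k then cst N Q else 0).
Definition cand N Q t i j := exp (- cst N Q * t) * PSeries (mcoef N (Ash N Q) i j) t.

Lemma cst_nonneg N Q : 0 <= cst N Q.
Proof. apply sumN_nonneg; intros; apply sumN_nonneg; intros; apply Rabs_pos. Qed.

Lemma row_le_cst N Q a : (a < N)%nat -> sumN N (fun b => Rabs (Q a b)) <= cst N Q.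
Proof. intros Ha. unfold cst. apply (term_le_sum N (fun a => sumN N (fun b => Rabs (Q a b)))); auto.
  intros; apply sumN_nonneg; intros; apply Rabs_pos. Qed.

Lemma entry_le_cst N Q a b : (a < N)%nat -> (b < N)%nat -> Rabs (Q a b) <= cst N Q.
Proof. intros. apply Rle_trans with (sumN N (fun b => Rabs (Q a b))); [|apply row_le_cst; auto]. apply (term_le_sum N (fun b => Rabs (Q a b))); auto.
  intros; apply Rabs_pos. Qed.

Lemma cand_radius N Q i j t : (i < N)%nat -> Rbar_lt (Rabs t) (CV_radius (mcoef N (Ash N Q) i j)).
Proof.
  intros Hi. apply (radius_inf _ (cst N (Ash N Q) + 1)).
  - pose proof (cst_nonneg N (Ash N Q)); lra.
  - intros n. unfold mcoef. unfold Rdiv. rewrite Rabs_mult.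
    rewrite (Rabs_pos_eq (/ _)) by (apply Rlt_le, Rinv_0_lt_compat, INR_fact_lt_0).
    apply Rmult_le_compat_r; [apply Rlt_le, Rinv_0_lt_compat, INR_fact_lt_0|].
    apply mpow_bound; auto; [|pose proof (cst_nonneg N (Ash N Q)); lra].
    intros a Ha. pose proof (row_le_cst N (Ash N Q) a Ha). lra.
Qed.

Lemma PS_derive_mcoef N A i j n :
  PS_derive (mcoef N A i j) n = sumN N (fun k => A i k * mcoef N A k j n).
Proof.
  unfold PS_derive, mcoef. simpl mpow. rewrite fact_simpl, mult_INR.
  pose proof (INR_fact_neq_0 n). assert (INR (S n) <> 0) by (apply not_0_INR; lia).
  rewrite (sumN_ext N (fun k => A i k * (mpow N A n k j / INR (Factorial.fact n))) (fun k => A i k * mpow N A n k j * / INR (Factorial.fact n))) by (intros; unfold Rdiv; ring).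
  rewrite sumN_scal_r. field. auto.
Qed.

Lemma cand_deriv N Q i j t : (i < N)%nat -> (j < N)%nat ->
  is_derive (fun s => cand N Q s i j) t (sumN N (fun k => Q i k * cand N Q t k j)).
Proof.
  intros Hi Hj. unfold cand. set (c := cst N Q).
  eapply Dext; [intros; reflexivity| |apply Dmult].
  3:{ apply is_derive_PSeries. apply cand_radius; auto. }
  2:{ apply (Dcomp exp (fun s => - c * s) t (exp (- c * t)) (- c)); [apply is_derive_exp|apply Dlin]. }
  rewrite (PSeries_ext (PS_derive (mcoef N (Ash N Q) i j)) (fun m => sumN N (fun k => Ash N Q i k * mcoef N (Ash N Q) k j m))) by (intros; apply PS_derive_mcoef).
  destruct (PSeries_sumN N (Ash N Q i) (fun k => mcoef N (Ash N Q) k j) t) as [_ Heq].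
  { intros; apply cand_radius; auto. }
  rewrite Heq.
  rewrite (sumN_ext N _ (fun k => Q i k * PSeries (mcoef N (Ash N Q) k j) t + (if Nat.eqb i k then 1 else 0) * (c * PSeries (mcoef N (Ash N Q) k j) t))).
  2:{ intros k _. unfold c. unfold Ash at 1. destruct (Nat.eqb i k); ring. }
  rewrite sumN_plus, sumN_delta by auto.
  rewrite (sumN_ext N (fun k => Q i k * (exp (- c * t) * PSeries (mcoef N (Ash N Q) k j) t)) (fun k => exp (- c * t) * (Q i k * PSeries (mcoef N (Ash N Q) k j) t))) by (intros; ring).
  rewrite sumN_scal. match goal with |- ?a = ?b => change (@eq R a b) end. ring.
Qed.

Lemma cand_0 N Q i j : cand N Q 0 i j = if Nat.eqb i j then 1 else 0.
Proof.
  unfold cand. rewrite PSeries_0. unfold mcoef. simpl. rewrite Rmult_0_r, exp_0. destruct (Nat.eqb i j); field.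
Qed.

Lemma cand_is_trans N Q : is_trans N Q (cand N Q).
Proof.
  split.
  - intros; apply cand_0.
  - intros i j t Hi Hj. apply is_derive_Reals. apply cand_deriv; auto.
Qed.

Lemma trans_is_trans N Q : is_trans N Q (trans N Q).
Proof. unfold trans. apply epsilon_spec. exists (cand N Q). apply cand_is_trans. Qed.

Lemma trans_deriv N Q i j t : (i < N)%nat -> (j < N)%nat ->
  is_derive (fun s => trans N Q s i j) t (sumN N (fun k => Q i k * trans N Q t k j)).
Proof. intros. apply is_derive_Reals. apply (proj2 (trans_is_trans N Q)); auto. Qed.

Lemma trans_0 N Q i j : (i < N)%nat -> (j < N)%nat -> trans N Q 0 i j = if Nat.eqb i j then 1 else 0.
Proof. intros. apply (proj1 (trans_is_trans N Q)); auto. Qed.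

Lemma trans_cand N Q t i j : (i < N)%nat -> (j < N)%nat -> trans N Q t i j = cand N Q t i j.
Proof.
  intros Hi Hj.
  assert (H := ode_uniq N Q (fun s k => trans N Q s k j - cand N Q s k j)).
  cut ((fun s k => trans N Q s k j - cand N Q s k j) t i = 0). { simpl. lra. }
  apply H; auto.
  - intros k s Hk. eapply Dext; [intros; reflexivity| |apply Dminus; [apply trans_deriv|apply cand_deriv]; auto].
    rewrite <- sumN_minus. apply sumN_ext. intros; ring.
  - intros k Hk. rewrite trans_0, cand_0; auto. ring.
Qed.

Lemma Series_nonneg (a : nat -> R) : ex_series a -> (forall n, 0 <= a n) -> 0 <= Series a.
Proof.
  intros He Ha. replace 0 with (Series (fun n => 0 * a n)).
  - apply Series_le; auto. intros n; rewrite Rmult_0_l; split; [lra|auto].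
  - rewrite Series_scal_l. ring.
Qed.

Lemma trans_nonneg N Q t i j : genQ N Q -> 0 <= t -> (i < N)%nat -> (j < N)%nat -> 0 <= trans N Q t i j.
Proof.
  intros [Hoff _] Ht Hi Hj. rewrite trans_cand by auto. unfold cand.
  apply Rmult_le_pos; [apply Rlt_le, exp_pos|].
  assert (HA : forall a b, (a < N)%nat -> (b < N)%nat -> 0 <= Ash N Q a b).
  { intros a b Ha Hb. unfold Ash. destruct (Nat.eqb_spec a b).
    - subst. pose proof (entry_le_cst N Q b b Hb Hb). pose proof (Rle_abs (- Q b b)). rewrite Rabs_Ropp in H0.
      lra.
    - pose proof (Hoff a b Ha Hb n). lra. }
  assert (HP : forall n a b, (a < N)%nat -> (b < N)%nat -> 0 <= mpow N (Ash N Q) n a b).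
  { induction n; intros a b Ha Hb; simpl.
    - destruct (Nat.eqb a b); lra.
    - apply sumN_nonneg. intros k Hk. apply Rmult_le_pos; auto. }
  unfold PSeries. apply Series_nonneg.
  - pose proof (CV_radius_inside _ t (cand_radius N Q i j t Hi)) as He.
    eapply ex_series_ext; [|exact He]. intros n. simpl. rewrite pow_n_pow. change (t ^ n * mcoef N (Ash N Q) i j n = mcoef N (Ash N Q) i j n * t ^ n). ring.
  - intros n. apply Rmult_le_pos; [|apply pow_le; auto]. unfold mcoef, Rdiv. apply Rmult_le_pos; auto.
    apply Rlt_le, Rinv_0_lt_compat, INR_fact_lt_0.
Qed.

Lemma trans_rowsum N Q t i : genQ N Q -> (i < N)%nat -> sumN N (fun j => trans N Q t i j) = 1.
Proof.
  intros [_ Hrow] Hi.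
  assert (H := ode_uniq N Q (fun s k => sumN N (fun j => trans N Q s k j) - 1)).
  cut ((fun s k => sumN N (fun j => trans N Q s k j) - 1) t i = 0). { simpl. lra. }
  apply H; auto.
  - intros k s Hk. eapply Dext; [intros; reflexivity| |apply Dminus; [apply (D_sumN N (fun j s => trans N Q s k j) (fun j s => sumN N (fun m => Q k m * trans N Q s m j)))|apply Dconst]].
    + rewrite sumN_swap. rewrite (sumN_ext N (fun b => sumN N (fun a => Q k b * trans N Q s b a)) (fun b => Q k b * sumN N (fun a => trans N Q s b a))) by (intros; apply sumN_scal).
      rewrite (sumN_ext N (fun m => Q k m * (sumN N (fun j => trans N Q s m j) - 1)) (fun m => Q k m * sumN N (fun a => trans N Q s m a) - Q k m)) by (intros; ring).
      rewrite sumN_minus, Hrow by auto. Rring.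
    + intros; apply trans_deriv; auto.
  - intros k Hk. rewrite (sumN_ext N _ (fun j => (if Nat.eqb k j then 1 else 0) * 1)).
    + rewrite sumN_delta by auto. ring.
    + intros; rewrite trans_0 by auto. ring.
Qed.

Lemma trans_le1 N Q t i j : genQ N Q -> 0 <= t -> (i < N)%nat -> (j < N)%nat -> Rabs (trans N Q t i j) <= 1.
Proof.
  intros HG Ht Hi Hj. rewrite Rabs_pos_eq by (apply trans_nonneg; auto).
  rewrite <- (trans_rowsum N Q t i HG Hi). apply (term_le_sum N (fun j => trans N Q t i j)); auto.
  intros; apply trans_nonneg; auto.
Qed.

Lemma trans_semi N Q s t i j : (i < N)%nat -> (j < N)%nat ->
  trans N Q (t + s) i j = sumN N (fun m => trans N Q t i m * trans N Q s m j).
Proof.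
  intros Hi Hj.
  assert (H := ode_uniq N Q (fun t k => trans N Q (t + s) k j - sumN N (fun m => trans N Q t k m * trans N Q s m j))).
  cut ((fun t k => trans N Q (t + s) k j - sumN N (fun m => trans N Q t k m * trans N Q s m j)) t i = 0). { simpl. lra. }
  apply H; auto.
  - intros k r Hk. eapply Dext; [intros; reflexivity| |apply Dminus].
    3:{ apply (D_sumN N (fun m r => trans N Q r k m * trans N Q s m j) (fun m r => sumN N (fun l => Q k l * trans N Q r l m) * trans N Q s m j)).
        intros m Hm. eapply Dext; [intros; reflexivity| |apply Dmult; [apply trans_deriv; auto|apply Dconst]]. Rring. }
    2:{ apply (Dcomp (fun x => trans N Q x k j) (fun r => r + s) r (sumN N (fun l => Q k l * trans N Q (r + s) l j)) 1).
        - apply trans_deriv; auto.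
        - eapply Dext; [intros; reflexivity| |apply Dplus; [apply Did|apply Dconst]]. Rring. }
    rewrite Rmult_1_l.
    rewrite (sumN_ext N (fun m => sumN N (fun l => Q k l * trans N Q r l m) * trans N Q s m j) (fun m => sumN N (fun l => Q k l * (trans N Q r l m * trans N Q s m j)))).
    2:{ intros. rewrite <- sumN_scal_r. apply sumN_ext. intros; ring. }
    rewrite sumN_swap.
    rewrite (sumN_ext N (fun b => sumN N (fun a => Q k b * (trans N Q r b a * trans N Q s a j))) (fun b => Q k b * sumN N (fun a => trans N Q r b a * trans N Q s a j))) by (intros; apply sumN_scal).
    rewrite <- sumN_minus. apply sumN_ext. intros; Rring.
  - intros k Hk. rewrite Rplus_0_l.
    rewrite (sumN_ext N _ (fun m => (if Nat.eqb k m then 1 else 0) * trans N Q s m j)) by (intros; rewrite trans_0; auto).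
    rewrite sumN_delta by auto. ring.
Qed.

Lemma trans_cont N Q i j t : (i < N)%nat -> (j < N)%nat -> continuous (fun s => trans N Q s i j) t.
Proof. intros. eapply D_cont. apply trans_deriv; auto. Qed.
Lemma cont_eps (f : R -> R) x :
  (forall eta, 0 < eta -> exists delta, 0 < delta /\ forall y, Rabs (y - x) < delta -> Rabs (f y - f x) < eta) ->
  continuous f x.
Proof.
  intros H. apply continuity_pt_filterlim. intros eps Heps. destruct (H eps Heps) as [d [Hd Hy]].
  exists d. split; auto. intros y [_ Hyd]. apply Hy. exact Hyd.
Qed.

Lemma cont_eps_inv (f : R -> R) x : continuous f x ->
  forall eta, 0 < eta -> exists delta, 0 < delta /\ forall y, Rabs (y - x) < delta -> Rabs (f y - f x) < eta.
Proof.
  intros H eta Heta. apply continuity_pt_filterlim in H. destruct (H eta Heta) as [d [Hd Hy]].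
  exists d. split; auto. intros y Hyd. destruct (Req_dec y x) as [->|Hne].
  - rewrite Rminus_diag, Rabs_R0. auto.
  - apply Hy. split; [split; [exact I|auto]|exact Hyd].
Qed.

Definition gx (g g' : R -> R) t := if Rle_dec 0 t then g t else g 0 + t * g' 0.
Definition gx' (g' : R -> R) t := if Rle_dec 0 t then g' t else g' 0.

Lemma gx_pos g g' t : 0 <= t -> gx g g' t = g t.
Proof. intros. unfold gx. destruct (Rle_dec 0 t); [auto|lra]. Qed.
Lemma gx'_pos g' t : 0 <= t -> gx' g' t = g' t.
Proof. intros. unfold gx'. destruct (Rle_dec 0 t); [auto|lra]. Qed.

Lemma gx_deriv g g' : C1_nonneg g g' -> forall t, is_derive (gx g g') t (gx' g' t).
Proof.
  intros [Hd _] t. apply is_derive_Reals. intros eta Heta.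
  destruct (Rlt_le_dec 0 t) as [Ht|Ht].
  - destruct (Hd t (Rlt_le _ _ Ht) eta Heta) as [d [Hd0 Hh]].
    exists (mkposreal (Rmin d t) (Rmin_pos _ _ Hd0 Ht)). intros h Hh0 Hhd. simpl in Hhd.
    assert (Rabs h < d) by (pose proof (Rmin_l d t); lra). assert (Rabs h < t) by (pose proof (Rmin_r d t); lra).
    assert (0 <= t + h) by (pose proof (Rle_abs (-h)); rewrite Rabs_Ropp in *; lra).
    rewrite !gx_pos, gx'_pos by lra. apply Hh; auto.
  - destruct (Req_dec t 0) as [->|Htn].
    + destruct (Hd 0 (Rle_refl 0) eta Heta) as [d [Hd0 Hh]].
      exists (mkposreal d Hd0). intros h Hh0 Hhd. simpl in Hhd. rewrite (gx'_pos g' 0), (gx_pos g g' 0) by lra.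
      destruct (Rle_dec 0 h) as [Hp|Hn].
      * rewrite gx_pos by lra. apply Hh; auto. lra.
      * unfold gx at 1. destruct (Rle_dec 0 (0 + h)); [lra|].
        replace ((g 0 + (0 + h) * g' 0 - g 0) / h - g' 0) with 0 by (field; auto). rewrite Rabs_R0; auto.
    + assert (t < 0) by lra. exists (mkposreal (- t) ltac:(lra)). intros h Hh0 Hhd. simpl in Hhd.
      assert (t + h < 0) by (pose proof (Rle_abs h); lra).
      unfold gx, gx'. destruct (Rle_dec 0 (t + h)); [lra|]. destruct (Rle_dec 0 t); [lra|].
      replace ((g 0 + (t + h) * g' 0 - (g 0 + t * g' 0)) / h - g' 0) with 0 by (field; auto). rewrite Rabs_R0; auto.
Qed.

Lemma gx'_cont g g' : C1_nonneg g g' -> forall t, continuous (gx' g') t.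
Proof.
  intros [_ Hc] t. apply cont_eps. intros eta Heta.
  destruct (Rlt_le_dec 0 t) as [Ht|Ht].
  - destruct (Hc t (Rlt_le _ _ Ht) eta Heta) as [d [Hd0 Hh]].
    exists (Rmin d t). split; [apply Rmin_pos; auto|]. intros y Hy.
    assert (Rabs (y - t) < d) by (pose proof (Rmin_l d t); lra). assert (Rabs (y - t) < t) by (pose proof (Rmin_r d t); lra).
    assert (0 <= y) by (pose proof (Rle_abs (-(y - t))); rewrite Rabs_Ropp in *; lra).
    rewrite !gx'_pos by lra. apply Hh; auto.
  - destruct (Req_dec t 0) as [->|Htn].
    + destruct (Hc 0 (Rle_refl 0) eta Heta) as [d [Hd0 Hh]]. exists d. split; auto. intros y Hy.
      rewrite (gx'_pos g' 0) by lra. unfold gx' at 1. destruct (Rle_dec 0 y).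
      * apply Hh; auto.
      * rewrite Rminus_diag, Rabs_R0. auto.
    + exists (- t). split; [lra|]. intros y Hy. assert (y < 0) by (pose proof (Rle_abs (y - t)); lra).
      unfold gx'. destruct (Rle_dec 0 y); [lra|]. destruct (Rle_dec 0 t); [lra|]. rewrite Rminus_diag, Rabs_R0. auto.
Qed.

Lemma gx_cont g g' : C1_nonneg g g' -> forall t, continuous (gx g g') t.
Proof. intros H t. eapply D_cont. apply gx_deriv; auto. Qed.

Definition T1 (u : R -> R) c0 c1 := forall eta, 0 < eta -> exists delta, 0 < delta /\
  forall e, 0 < e < delta -> Rabs (u e - (c0 + c1 * e)) <= eta * e.
Definition T2 (u : R -> R) c0 c1 c2 := forall eta, 0 < eta -> exists delta, 0 < delta /\
  forall e, 0 < e < delta -> Rabs (u e - (c0 + c1 * e + c2 * e ^ 2)) <= eta * e ^ 2.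

Lemma T1_ext u v c0 c1 : (forall e, 0 < e -> u e = v e) -> T1 u c0 c1 -> T1 v c0 c1.
Proof. intros He H eta Heta. destruct (H eta Heta) as [d [Hd Hb]]. exists d. split; auto. intros. rewrite <- He by lra. auto. Qed.
Lemma T2_ext u v c0 c1 c2 : (forall e, 0 < e -> u e = v e) -> T2 u c0 c1 c2 -> T2 v c0 c1 c2.
Proof. intros He H eta Heta. destruct (H eta Heta) as [d [Hd Hb]]. exists d. split; auto. intros. rewrite <- He by lra. auto. Qed.
Lemma T1_coef u c0 c1 d0 d1 : c0 = d0 -> c1 = d1 -> T1 u c0 c1 -> T1 u d0 d1.
Proof. intros -> ->. auto. Qed.
Lemma T2_coef u c0 c1 c2 d0 d1 d2 : c0 = d0 -> c1 = d1 -> c2 = d2 -> T2 u c0 c1 c2 -> T2 u d0 d1 d2.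
Proof. intros -> -> ->. auto. Qed.

Lemma T1_const c : T1 (fun _ => c) c 0.
Proof. intros eta Heta. exists 1. split; [lra|]. intros e He. replace (c - (c + 0 * e)) with 0 by ring. rewrite Rabs_R0. nra. Qed.
Lemma T2_const c : T2 (fun _ => c) c 0 0.
Proof. intros eta Heta. exists 1. split; [lra|]. intros e He. replace (c - (c + 0 * e + 0 * e ^ 2)) with 0 by ring. rewrite Rabs_R0. pose proof (pow2_ge_0 e). nra. Qed.

Lemma T1_plus u v a0 a1 b0 b1 : T1 u a0 a1 -> T1 v b0 b1 -> T1 (fun e => u e + v e) (a0 + b0) (a1 + b1).
Proof.
  intros Hu Hv eta Heta. destruct (Hu (eta/2) ltac:(lra)) as [d1 [Hd1 H1]]. destruct (Hv (eta/2) ltac:(lra)) as [d2 [Hd2 H2]].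
  exists (Rmin d1 d2). split; [apply Rmin_pos; auto|]. intros e He.
  assert (e < d1) by (pose proof (Rmin_l d1 d2); lra). assert (e < d2) by (pose proof (Rmin_r d1 d2); lra).
  specialize (H1 e ltac:(lra)). specialize (H2 e ltac:(lra)).
  replace (u e + v e - (a0 + b0 + (a1 + b1) * e)) with ((u e - (a0 + a1 * e)) + (v e - (b0 + b1 * e))) by ring.
  eapply Rle_trans; [apply Rabs_triang|]. lra.
Qed.
Lemma T2_plus u v a0 a1 a2 b0 b1 b2 : T2 u a0 a1 a2 -> T2 v b0 b1 b2 -> T2 (fun e => u e + v e) (a0 + b0) (a1 + b1) (a2 + b2).
Proof.
  intros Hu Hv eta Heta. destruct (Hu (eta/2) ltac:(lra)) as [d1 [Hd1 H1]]. destruct (Hv (eta/2) ltac:(lra)) as [d2 [Hd2 H2]].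
  exists (Rmin d1 d2). split; [apply Rmin_pos; auto|]. intros e He.
  assert (e < d1) by (pose proof (Rmin_l d1 d2); lra). assert (e < d2) by (pose proof (Rmin_r d1 d2); lra).
  specialize (H1 e ltac:(lra)). specialize (H2 e ltac:(lra)).
  replace (u e + v e - (a0 + b0 + (a1 + b1) * e + (a2 + b2) * e ^ 2)) with ((u e - (a0 + a1 * e + a2 * e ^ 2)) + (v e - (b0 + b1 * e + b2 * e ^ 2))) by ring.
  eapply Rle_trans; [apply Rabs_triang|]. lra.
Qed.

Lemma T1_scal c u a0 a1 : T1 u a0 a1 -> T1 (fun e => c * u e) (c * a0) (c * a1).
Proof.
  intros Hu eta Heta. assert (Hp : 0 < eta / (Rabs c + 1)) by (apply Rdiv_lt_0_compat; auto; pose proof (Rabs_pos c); lra).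
  destruct (Hu _ Hp) as [d [Hd H]].
  exists d. split; auto. intros e He. specialize (H e He).
  replace (c * u e - (c * a0 + c * a1 * e)) with (c * (u e - (a0 + a1 * e))) by ring. rewrite Rabs_mult.
  pose proof (Rabs_pos c). pose proof (Rabs_pos (u e - (a0 + a1 * e))).
  apply Rle_trans with ((Rabs c + 1) * (eta / (Rabs c + 1) * e)); [nra|]. right; field; lra.
Qed.
Lemma T2_scal c u a0 a1 a2 : T2 u a0 a1 a2 -> T2 (fun e => c * u e) (c * a0) (c * a1) (c * a2).
Proof.
  intros Hu eta Heta. assert (Hp : 0 < eta / (Rabs c + 1)) by (apply Rdiv_lt_0_compat; auto; pose proof (Rabs_pos c); lra).
  destruct (Hu _ Hp) as [d [Hd H]].
  exists d. split; auto. intros e He. specialize (H e He).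
  replace (c * u e - (c * a0 + c * a1 * e + c * a2 * e ^ 2)) with (c * (u e - (a0 + a1 * e + a2 * e ^ 2))) by ring. rewrite Rabs_mult.
  pose proof (Rabs_pos c). pose proof (Rabs_pos (u e - (a0 + a1 * e + a2 * e ^ 2))). pose proof (pow2_ge_0 e).
  apply Rle_trans with ((Rabs c + 1) * (eta / (Rabs c + 1) * e ^ 2)); [nra|]. right; field; lra.
Qed.

Lemma Rabs4 a b c d : Rabs (a + b + c + d) <= Rabs a + Rabs b + Rabs c + Rabs d.
Proof. eapply Rle_trans; [apply Rabs_triang|]. pose proof (Rabs_triang (a + b) c). pose proof (Rabs_triang a b). lra. Qed.

Lemma T1_mult u v a0 a1 b0 b1 : T1 u a0 a1 -> T1 v b0 b1 -> T1 (fun e => u e * v e) (a0 * b0) (a0 * b1 + a1 * b0).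
Proof.
  intros Hu Hv eta Heta.
  set (K := Rabs a0 + Rabs a1 + Rabs b0 + Rabs b1 + 2).
  assert (HK : 2 <= K) by (unfold K; pose proof (Rabs_pos a0); pose proof (Rabs_pos a1); pose proof (Rabs_pos b0); pose proof (Rabs_pos b1); lra).
  set (z := Rmin 1 (eta / (4 * K * K))).
  assert (Hz : 0 < z) by (apply Rmin_pos; [lra|apply Rdiv_lt_0_compat; nra]).
  assert (Hz1 : z <= 1) by apply Rmin_l. assert (Hz2 : z <= eta / (4 * K * K)) by apply Rmin_r.
  destruct (Hu z Hz) as [d1 [Hd1 H1]]. destruct (Hv z Hz) as [d2 [Hd2 H2]].
  exists (Rmin (Rmin d1 d2) z). split; [apply Rmin_pos; [apply Rmin_pos|]; auto|]. intros e He.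
  assert (e < d1) by (pose proof (Rmin_l (Rmin d1 d2) z); pose proof (Rmin_l d1 d2); lra).
  assert (e < d2) by (pose proof (Rmin_l (Rmin d1 d2) z); pose proof (Rmin_r d1 d2); lra).
  assert (e < z) by (pose proof (Rmin_r (Rmin d1 d2) z); lra).
  specialize (H1 e ltac:(lra)). specialize (H2 e ltac:(lra)).
  set (r := u e - (a0 + a1 * e)). set (s := v e - (b0 + b1 * e)).
  replace (u e * v e - (a0 * b0 + (a0 * b1 + a1 * b0) * e)) with
    (r * (b0 + b1 * e) + (a0 + a1 * e) * s + r * s + a1 * b1 * e * e) by (unfold r, s; ring).
  assert (Hr : Rabs r <= z * e) by exact H1. assert (Hs : Rabs s <= z * e) by exact H2.
  assert (Hb : Rabs (b0 + b1 * e) <= K). { eapply Rle_trans; [apply Rabs_triang|]. rewrite Rabs_mult, (Rabs_pos_eq e) by lra.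
    unfold K. pose proof (Rabs_pos a0); pose proof (Rabs_pos a1); pose proof (Rabs_pos b1). nra. }
  assert (Ha : Rabs (a0 + a1 * e) <= K). { eapply Rle_trans; [apply Rabs_triang|]. rewrite Rabs_mult, (Rabs_pos_eq e) by lra.
    unfold K. pose proof (Rabs_pos b0); pose proof (Rabs_pos a1); pose proof (Rabs_pos b1). nra. }
  assert (Hab : Rabs (a1 * b1) <= K * K). { rewrite Rabs_mult. unfold K. pose proof (Rabs_pos a0); pose proof (Rabs_pos a1); pose proof (Rabs_pos b1); pose proof (Rabs_pos b0). nra. }
  assert (zK : z * K * K <= eta / 4). { apply Rle_trans with (eta / (4 * K * K) * K * K); [apply Rmult_le_compat_r; [lra|]; apply Rmult_le_compat_r; lra|]. right. field. lra. }
  eapply Rle_trans; [apply Rabs4|]. rewrite !Rabs_mult. rewrite (Rabs_pos_eq e) by lra.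
  pose proof (Rabs_pos r). pose proof (Rabs_pos s). pose proof (Rabs_pos (b0 + b1 * e)). pose proof (Rabs_pos (a0 + a1 * e)).
  pose proof (Rabs_pos (a1 * b1)). rewrite Rabs_mult in Hab.
  assert (Rabs r * Rabs (b0 + b1 * e) <= z * e * K) by nra.
  assert (Rabs (a0 + a1 * e) * Rabs s <= K * (z * e)) by nra.
  assert (Rabs r * Rabs s <= z * e * (z * e)) by nra.
  assert (Rabs a1 * Rabs b1 * e * e <= K * K * z * e).
  { apply Rle_trans with (K * K * e * e).
    - apply Rmult_le_compat_r; [lra|]. apply Rmult_le_compat_r; [lra|]. exact Hab.
    - assert (0 <= K * K * e) by (apply Rmult_le_pos; nra). nra. }
  assert (zK1 : z * K <= eta / 4) by nra.
  assert (z * e * K <= eta / 4 * e) by nra.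
  assert (z * e * (z * e) <= eta / 4 * e). { assert (z * e <= K) by nra. assert (0 <= z * e) by nra. nra. }
  assert (K * K * z * e <= eta / 4 * e) by nra.
  lra.
Qed.
Lemma T2_mult u v a0 a1 a2 b0 b1 b2 : T2 u a0 a1 a2 -> T2 v b0 b1 b2 ->
  T2 (fun e => u e * v e) (a0 * b0) (a0 * b1 + a1 * b0) (a0 * b2 + a1 * b1 + a2 * b0).
Proof.
  intros Hu Hv eta Heta.
  set (K := Rabs a0 + Rabs a1 + Rabs a2 + Rabs b0 + Rabs b1 + Rabs b2 + 2).
  assert (HK : 2 <= K) by (unfold K; pose proof (Rabs_pos a0); pose proof (Rabs_pos a1); pose proof (Rabs_pos a2); pose proof (Rabs_pos b0); pose proof (Rabs_pos b1); pose proof (Rabs_pos b2); lra).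
  set (z := Rmin 1 (eta / (8 * K * K))).
  assert (Hz : 0 < z) by (apply Rmin_pos; [lra|apply Rdiv_lt_0_compat; nra]).
  assert (Hz1 : z <= 1) by apply Rmin_l. assert (Hz2 : z <= eta / (8 * K * K)) by apply Rmin_r.
  assert (zK : z * K * K <= eta / 8). { apply Rle_trans with (eta / (8 * K * K) * K * K); [apply Rmult_le_compat_r; [lra|]; apply Rmult_le_compat_r; lra|]. right. field. lra. }
  destruct (Hu z Hz) as [d1 [Hd1 H1]]. destruct (Hv z Hz) as [d2 [Hd2 H2]].
  exists (Rmin (Rmin d1 d2) z). split; [apply Rmin_pos; [apply Rmin_pos|]; auto|]. intros e He.
  assert (e < d1) by (pose proof (Rmin_l (Rmin d1 d2) z); pose proof (Rmin_l d1 d2); lra).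
  assert (e < d2) by (pose proof (Rmin_l (Rmin d1 d2) z); pose proof (Rmin_r d1 d2); lra).
  assert (e < z) by (pose proof (Rmin_r (Rmin d1 d2) z); lra).
  specialize (H1 e ltac:(lra)). specialize (H2 e ltac:(lra)).
  set (U := a0 + a1 * e + a2 * e ^ 2). set (V := b0 + b1 * e + b2 * e ^ 2).
  set (r := u e - U). set (s := v e - V).
  replace (u e * v e - (a0 * b0 + (a0 * b1 + a1 * b0) * e + (a0 * b2 + a1 * b1 + a2 * b0) * e ^ 2)) with
    (r * V + U * s + r * s + ((a1 * b2 + a2 * b1) * e + a2 * b2 * e ^ 2) * e ^ 2) by (unfold r, s, U, V; ring).
  assert (Hr : Rabs r <= z * e ^ 2) by exact H1. assert (Hs : Rabs s <= z * e ^ 2) by exact H2.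
  assert (He2 : 0 <= e ^ 2) by apply pow2_ge_0. assert (He21 : e ^ 2 <= e) by (simpl; nra).
  pose proof (Rabs_pos a0); pose proof (Rabs_pos a1); pose proof (Rabs_pos a2); pose proof (Rabs_pos b0); pose proof (Rabs_pos b1); pose proof (Rabs_pos b2).
  assert (HU : Rabs U <= K). { unfold U. eapply Rle_trans; [apply Rabs_triang|]. eapply Rle_trans; [apply Rplus_le_compat_r, Rabs_triang|].
    rewrite !Rabs_mult, (Rabs_pos_eq e), (Rabs_pos_eq (e ^ 2)) by lra. unfold K. nra. }
  assert (HV : Rabs V <= K). { unfold V. eapply Rle_trans; [apply Rabs_triang|]. eapply Rle_trans; [apply Rplus_le_compat_r, Rabs_triang|].
    rewrite !Rabs_mult, (Rabs_pos_eq e), (Rabs_pos_eq (e ^ 2)) by lra. unfold K. nra. }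
  assert (HW : Rabs ((a1 * b2 + a2 * b1) * e + a2 * b2 * e ^ 2) <= 3 * K * K * z).
  { eapply Rle_trans; [apply Rabs_triang|]. rewrite !Rabs_mult, (Rabs_pos_eq e), (Rabs_pos_eq (e ^ 2)) by lra.
    assert (Rabs (a1 * b2 + a2 * b1) <= 2 * K * K).
    { eapply Rle_trans; [apply Rabs_triang|]. rewrite !Rabs_mult. unfold K. nra. }
    assert (Rabs a2 * Rabs b2 <= K * K) by (unfold K; nra).
    pose proof (Rabs_pos (a1 * b2 + a2 * b1)).
    assert (Rabs (a1 * b2 + a2 * b1) * e <= 2 * K * K * z) by nra.
    assert (Rabs a2 * Rabs b2 * e ^ 2 <= K * K * z) by (apply Rle_trans with (K * K * e); [apply Rle_trans with (Rabs a2 * Rabs b2 * e); [apply Rmult_le_compat_l; nra|apply Rmult_le_compat_r; lra]|nra]).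
    lra. }
  eapply Rle_trans; [apply Rabs4|]. rewrite !Rabs_mult. rewrite (Rabs_pos_eq (e ^ 2)) by lra.
  pose proof (Rabs_pos r). pose proof (Rabs_pos s). pose proof (Rabs_pos U). pose proof (Rabs_pos V).
  assert (Rabs r * Rabs V <= z * e ^ 2 * K) by nra.
  assert (Rabs U * Rabs s <= K * (z * e ^ 2)) by nra.
  assert (Rabs r * Rabs s <= z * e ^ 2 * K). { assert (Rabs s <= K) by nra. nra. }
  assert (Rabs ((a1 * b2 + a2 * b1) * e + a2 * b2 * e ^ 2) * e ^ 2 <= 3 * K * K * z * e ^ 2) by nra.
  assert (z * K <= z * K * K) by (rewrite <- (Rmult_1_r (z * K)) at 1; apply Rmult_le_compat_l; nra).
  assert (z * e ^ 2 * K <= eta / 8 * e ^ 2) by nra.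
  assert (3 * K * K * z * e ^ 2 <= 3 * (eta / 8) * e ^ 2) by nra.
  nra.
Qed.

Lemma T1_sumN n (F : nat -> R -> R) c0 c1 :
  (forall k, (k < n)%nat -> T1 (F k) (c0 k) (c1 k)) ->
  T1 (fun e => sumN n (fun k => F k e)) (sumN n c0) (sumN n c1).
Proof.
  induction n; intros H.
  - eapply T1_ext; [|eapply T1_coef; [| |apply (T1_const 0)]]; intros; rewrite ?sumN_0; try reflexivity.
  - eapply T1_ext; [intros; symmetry; apply sumN_S|]. rewrite !sumN_S.
    apply T1_plus; [apply IHn; intros; apply H; lia|apply H; lia].
Qed.

Lemma T2_sumN n (F : nat -> R -> R) c0 c1 c2 :
  (forall k, (k < n)%nat -> T2 (F k) (c0 k) (c1 k) (c2 k)) ->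
  T2 (fun e => sumN n (fun k => F k e)) (sumN n c0) (sumN n c1) (sumN n c2).
Proof.
  induction n; intros H.
  - eapply T2_ext; [|eapply T2_coef; [| | |apply (T2_const 0)]]; intros; rewrite ?sumN_0; try reflexivity.
  - eapply T2_ext; [intros; symmetry; apply sumN_S|]. rewrite !sumN_S.
    apply T2_plus; [apply IHn; intros; apply H; lia|apply H; lia].
Qed.

Lemma T1_of_deriv u l : is_derive u 0 l -> T1 u (u 0) l.
Proof.
  intros H eta Heta. apply is_derive_Reals in H. destruct (H eta Heta) as [d Hd].
  exists d. split; [apply cond_pos|]. intros e He.
  specialize (Hd e ltac:(lra) ltac:(rewrite Rabs_pos_eq; lra)).
  rewrite Rplus_0_l in Hd.
  replace (u e - (u 0 + l * e)) with (e * ((u e - u 0) / e - l)) by (field; lra).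
  rewrite Rabs_mult, Rabs_pos_eq by lra. rewrite Rmult_comm. apply Rmult_le_compat_r; lra.
Qed.

Lemma T1_of_C1 g g' : C1_nonneg g g' -> T1 g (g 0) (g' 0).
Proof.
  intros [Hd _] eta Heta. destruct (Hd 0 (Rle_refl 0) eta Heta) as [d [Hd0 Hh]].
  exists d. split; auto. intros e He.
  specialize (Hh e ltac:(lra) ltac:(rewrite Rabs_pos_eq; lra) ltac:(lra)).
  rewrite Rplus_0_l in Hh.
  replace (g e - (g 0 + g' 0 * e)) with (e * ((g e - g 0) / e - g' 0)) by (field; lra).
  rewrite Rabs_mult, Rabs_pos_eq by lra. rewrite Rmult_comm. apply Rmult_le_compat_r; lra.
Qed.

Lemma RInt_id a b : RInt (fun t => t) a b = (b * b - a * a) / 2.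
Proof.
  apply is_RInt_unique.
  assert (H := is_RInt_derive (fun t => t * t / 2) (fun t => t) a b).
  replace ((b * b - a * a) / 2) with (minus (b * b / 2) (a * a / 2)).
  - apply H.
    + intros x _. apply (Dext (fun t => / 2 * (t * t)) _ x (/ 2 * (1 * x + x * 1))); [intros; field| Rfield| apply Dscal, Dmult; apply Did].
    + intros; apply continuous_id.
  - change (minus (b * b / 2) (a * a / 2)) with (b * b / 2 - a * a / 2). Rfield.
Qed.

Lemma T2_int (psi : R -> R) a b : (forall e, 0 < e -> ex_RInt psi 0 e) -> psi 0 = a -> T1 psi a b ->
  T2 (fun e => RInt psi 0 e) 0 a (b / 2).
Proof.
  intros Hex H0 H eta Heta. destruct (H eta Heta) as [d [Hd Hb]]. exists d. split; auto. intros e He.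
  assert (Hl : ex_RInt (fun t => a + b * t) 0 e) by (apply ex_RInt_cont; intros; apply C_plus; [apply C_const|apply C_mult; [apply C_const|apply C_id]]).
  replace (0 + a * e + b / 2 * e ^ 2) with (RInt (fun t => a + b * t) 0 e).
  2:{ assert (E1 : ex_RInt (fun _ : R => a) 0 e) by apply ex_RInt_const.
      assert (E2 : ex_RInt (fun t : R => t) 0 e) by (apply ex_RInt_cont; intros; apply C_id).
      assert (E3 : ex_RInt (fun t : R => b * t) 0 e) by (apply ex_RInt_scalR; auto).
      rewrite (RInt_plusR _ _ _ _ E1 E3), RInt_constR, (RInt_scalR _ _ _ _ E2), RInt_id. simpl. field. }
  rewrite <- RInt_minusR by (auto; apply Hex; lra).
  eapply Rle_trans; [apply RInt_bound with (M := eta * e)|].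
  - lra.
  - apply ex_RInt_minusR; auto. apply Hex; lra.
  - intros t Ht. destruct (Req_dec t 0) as [->|Hne].
    + rewrite H0. replace (a - (a + b * 0)) with 0 by ring. rewrite Rabs_R0. nra.
    + eapply Rle_trans; [apply (Hb t); lra|]. apply Rmult_le_compat_l; lra.
  - simpl. nra.
Qed.

Lemma T2_of_deriv (u du : R -> R) d2 : (forall t, is_derive u t (du t)) -> (forall t, continuous du t) ->
  T1 du (du 0) d2 -> T2 u (u 0) (du 0) (d2 / 2).
Proof.
  intros Hd Hc H1.
  assert (HT := T2_int du (du 0) d2 (fun e _ => ex_RInt_cont du 0 e Hc) eq_refl H1).
  assert (HT2 := T2_plus _ _ _ _ _ _ _ _ (T2_const (u 0)) HT).
  eapply T2_ext; [|eapply T2_coef; [| | |exact HT2]]; try ring.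
  intros e He. simpl. rewrite (is_RInt_unique du 0 e (minus (u e) (u 0))).
  - change (minus (u e) (u 0)) with (u e - u 0). ring.
  - apply (is_RInt_derive (V:=R_CompleteNormedModule)); auto.
Qed.
Definition ImpConv (h : R -> R) (l : R) := forall eta, 0 < eta -> exists B, 0 <= B /\
  forall b, B <= b -> ex_RInt h 0 b /\ Rabs (RInt h 0 b - l) < eta.

Lemma int0inf_eq h l : ImpConv h l -> int0inf h = l.
Proof.
  intros H.
  set (Pr := fun l => forall eta, 0 < eta -> exists B, forall b, B <= b ->
     exists pr : Riemann_integrable h 0 b, Rabs (RiemannInt pr - l) < eta).
  assert (Hl : Pr l).
  { intros eta Heta. destruct (H eta Heta) as [B [_ HB]]. exists B. intros b Hb. destruct (HB b Hb) as [He Hlt].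
    exists (ex_RInt_Reals_0 _ _ _ He). rewrite <- RInt_Reals. exact Hlt. }
  assert (Hs : Pr (int0inf h)) by (unfold int0inf; apply epsilon_spec; exists l; exact Hl).
  destruct (Req_dec (int0inf h) l) as [E|Hne]; auto. exfalso.
  set (eta := Rabs (int0inf h - l) / 2).
  assert (Heta : 0 < eta) by (unfold eta; apply Rdiv_lt_0_compat; [apply Rabs_pos_lt; lra|lra]).
  destruct (Hl eta Heta) as [B1 H1]. destruct (Hs eta Heta) as [B2 H2].
  destruct (H1 (Rmax B1 B2) (Rmax_l _ _)) as [pr1 Hp1]. destruct (H2 (Rmax B1 B2) (Rmax_r _ _)) as [pr2 Hp2].
  rewrite (RiemannInt_P5 pr1 pr2) in Hp1.
  assert (Rabs (int0inf h - l) <= Rabs (RiemannInt pr2 - l) + Rabs (RiemannInt pr2 - int0inf h)).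
  { replace (int0inf h - l) with ((RiemannInt pr2 - l) - (RiemannInt pr2 - int0inf h)) by ring.
    eapply Rle_trans; [apply Rabs_triang|]. rewrite Rabs_Ropp. lra. }
  unfold eta in *. lra.
Qed.

Lemma ImpConv_ext h1 h2 l : (forall t, 0 < t -> h1 t = h2 t) -> ImpConv h1 l -> ImpConv h2 l.
Proof.
  intros He H eta Heta. destruct (H eta Heta) as [B [HB0 HB]]. exists (Rmax B 1). split; [pose proof (Rmax_r B 1); lra|].
  intros b Hb. assert (B <= b) by (pose proof (Rmax_l B 1); lra). assert (1 <= b) by (pose proof (Rmax_r B 1); lra).
  destruct (HB b H0) as [Hex Hlt].
  assert (Hx : forall x, Rmin 0 b < x < Rmax 0 b -> h1 x = h2 x).
  { intros x Hx. rewrite Rmin_left, Rmax_right in Hx by lra. apply He; lra. }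
  split; [eapply ex_RInt_ext; eauto|]. rewrite <- (RInt_ext _ _ _ _ Hx). auto.
Qed.

Lemma ImpConv_plus h1 h2 l1 l2 : ImpConv h1 l1 -> ImpConv h2 l2 -> ImpConv (fun t => h1 t + h2 t) (l1 + l2).
Proof.
  intros H1 H2 eta Heta. destruct (H1 (eta/2) ltac:(lra)) as [B1 [HB1 P1]]. destruct (H2 (eta/2) ltac:(lra)) as [B2 [HB2 P2]].
  exists (Rmax B1 B2). split; [pose proof (Rmax_l B1 B2); lra|]. intros b Hb.
  destruct (P1 b ltac:(pose proof (Rmax_l B1 B2); lra)) as [E1 L1]. destruct (P2 b ltac:(pose proof (Rmax_r B1 B2); lra)) as [E2 L2].
  split; [apply ex_RInt_plusR; auto|]. rewrite RInt_plusR by auto.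
  replace (RInt h1 0 b + RInt h2 0 b - (l1 + l2)) with ((RInt h1 0 b - l1) + (RInt h2 0 b - l2)) by ring.
  eapply Rle_lt_trans; [apply Rabs_triang|]. lra.
Qed.

Lemma ImpConv_scal c h l : ImpConv h l -> ImpConv (fun t => c * h t) (c * l).
Proof.
  intros H eta Heta. assert (Hp : 0 < eta / (Rabs c + 1)) by (apply Rdiv_lt_0_compat; auto; pose proof (Rabs_pos c); lra).
  destruct (H _ Hp) as [B [HB0 HB]]. exists B. split; auto. intros b Hb. destruct (HB b Hb) as [E Lt].
  split; [apply ex_RInt_scalR; auto|]. rewrite RInt_scalR by auto.
  replace (c * RInt h 0 b - c * l) with (c * (RInt h 0 b - l)) by ring. rewrite Rabs_mult.
  pose proof (Rabs_pos c). pose proof (Rabs_pos (RInt h 0 b - l)).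
  apply Rle_lt_trans with (Rabs c * (eta / (Rabs c + 1))); [apply Rmult_le_compat_l; lra|].
  apply Rlt_le_trans with ((Rabs c + 1) * (eta / (Rabs c + 1))); [nra|]. right; field; lra.
Qed.

Lemma ImpConv_sumN n (F : nat -> R -> R) (L : nat -> R) :
  (forall k, (k < n)%nat -> ImpConv (F k) (L k)) -> ImpConv (fun t => sumN n (fun k => F k t)) (sumN n L).
Proof.
  induction n; intros H.
  - intros eta Heta. exists 0. split; [lra|]. intros b Hb. rewrite sumN_0.
    split; [apply (ex_RInt_ext (fun _ => 0)); [intros; reflexivity|apply ex_RInt_const]|].
    rewrite (RInt_ext _ (fun _ => 0)) by (intros; reflexivity). rewrite RInt_constR. rewrite Rmult_0_r, Rminus_0_r, Rabs_R0. auto.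
  - intros eta Heta. rewrite sumN_S.
    assert (HP := ImpConv_plus _ _ _ _ (IHn ltac:(intros; apply H; lia)) (H n ltac:(lia)) eta Heta).
    destruct HP as [B [HB0 HB]]. exists B. split; auto. intros b Hb. destruct (HB b Hb) as [E Lt].
    split.
    + eapply ex_RInt_ext; [|exact E]. intros; simpl. rewrite sumN_S. reflexivity.
    + rewrite (RInt_ext _ (fun t => sumN n (fun k => F k t) + F n t)) by (intros; apply sumN_S). exact Lt.
Qed.

Definition BI (phi : R -> R) := exists M, forall b, 0 <= b -> RInt phi 0 b <= M.

Lemma RInt_mono_upper (phi : R -> R) b1 b2 : (forall t, continuous phi t) -> (forall t, 0 <= t -> 0 <= phi t) ->
  0 <= b1 <= b2 -> RInt phi 0 b1 <= RInt phi 0 b2.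
Proof.
  intros Hc Hp Hb. rewrite <- (RInt_ChaslesR phi 0 b1 b2) by (apply ex_RInt_cont; auto).
  assert (0 <= RInt phi b1 b2) by (apply RInt_ge0; [lra|apply ex_RInt_cont; auto|intros; apply Hp; lra]). lra.
Qed.

Lemma tail_of_BI (phi : R -> R) : (forall t, continuous phi t) -> (forall t, 0 <= t -> 0 <= phi t) -> BI phi ->
  forall eta, 0 < eta -> exists B, 0 <= B /\ forall b1 b2, B <= b1 <= b2 -> RInt phi b1 b2 <= eta.
Proof.
  intros Hc Hp [M HM] eta Heta.
  set (E := fun x => exists b, 0 <= b /\ x = RInt phi 0 b).
  destruct (completeness E) as [s [Hub Hlub]].
  { exists M. intros x [b [Hb ->]]. auto. }
  { exists (RInt phi 0 0). exists 0. split; [lra|auto]. }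
  assert (Hex : exists b0, 0 <= b0 /\ s - eta < RInt phi 0 b0).
  { apply Classical_Prop.NNPP. intros Hn.
    assert (is_upper_bound E (s - eta)).
    { intros x [b [Hb ->]]. apply Rnot_lt_le. intros Hlt. apply Hn. exists b. auto. }
    specialize (Hlub _ H). lra. }
  destruct Hex as [b0 [Hb0 Hlt]]. exists b0. split; auto. intros b1 b2 Hb.
  assert (RInt phi 0 b2 <= s) by (apply Hub; exists b2; split; [lra|auto]).
  assert (RInt phi 0 b0 <= RInt phi 0 b1) by (apply RInt_mono_upper; auto; lra).
  rewrite <- (RInt_ChaslesR phi 0 b1 b2) in H by (apply ex_RInt_cont; auto). lra.
Qed.

Lemma tail_bound (h phi : R -> R) b1 b2 : (forall t, continuous h t) -> (forall t, continuous phi t) ->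
  (forall t, 0 <= t -> Rabs (h t) <= phi t) -> 0 <= b1 <= b2 -> Rabs (RInt h b1 b2) <= RInt phi b1 b2.
Proof.
  intros Hh Hphi Hb Hb12. eapply Rle_trans; [apply RInt_abs_le; [lra|apply ex_RInt_cont; auto]|].
  apply RInt_leR; [lra| |apply ex_RInt_cont; auto|intros; apply Hb; lra].
  apply ex_RInt_cont. intros; apply C_abs; auto.
Qed.

Lemma ImpConv_exists (h phi : R -> R) : (forall t, continuous h t) -> (forall t, continuous phi t) ->
  (forall t, 0 <= t -> Rabs (h t) <= phi t) -> BI phi -> exists l, ImpConv h l.
Proof.
  intros Hh Hphi Hb HBI.
  assert (Hp : forall t, 0 <= t -> 0 <= phi t) by (intros t Ht; pose proof (Hb t Ht); pose proof (Rabs_pos (h t)); lra).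
  assert (Htail := tail_of_BI phi Hphi Hp HBI).
  set (u := fun n : nat => RInt h 0 (INR n)).
  assert (Hcau : ex_lim_seq_cauchy u).
  { intros eps. destruct (Htail (eps / 2) ltac:(destruct eps; simpl; lra)) as [B [HB0 HB]].
    destruct (INR_unbounded B) as [N HN]. exists N. intros n m Hn Hm.
    assert (forall p q, (N <= p)%nat -> (p <= q)%nat -> Rabs (u q - u p) <= eps / 2) as H.
    { intros p q Hp1 Hpq. unfold u. rewrite <- (RInt_ChaslesR h 0 (INR p) (INR q)) by (apply ex_RInt_cont; auto).
      assert (E : forall a c : R, a + c - a = c) by (intros; ring). rewrite E.
      assert (INR N <= INR p) by (apply le_INR; auto). assert (INR p <= INR q) by (apply le_INR; auto).
      eapply Rle_trans; [apply (tail_bound h phi); auto; pose proof (pos_INR p); lra|]. apply HB; lra. }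
    destruct (Nat.le_ge_cases n m) as [Hnm|Hnm].
    - specialize (H n m Hn Hnm). rewrite Rabs_minus_sym in H. destruct eps; simpl in *; lra.
    - specialize (H m n Hm Hnm). destruct eps; simpl in *; lra. }
  apply ex_lim_seq_cauchy_corr in Hcau. destruct Hcau as [l Hl]. exists l.
  apply is_lim_seq_spec in Hl.
  intros eta Heta. destruct (Hl (mkposreal (eta / 2) ltac:(lra))) as [N1 HN1].
  destruct (Htail (eta / 4) ltac:(lra)) as [B [HB0 HB]].
  exists (Rmax B (INR N1)). split; [pose proof (Rmax_l B (INR N1)); lra|]. intros b Hb2.
  split; [apply ex_RInt_cont; auto|].
  destruct (INR_unbounded b) as [n Hn]. set (n' := Nat.max n N1).
  assert (INR n <= INR n') by (apply le_INR; lia). assert (N1 <= n')%nat by lia.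
  specialize (HN1 n' H0). simpl in HN1. unfold u in HN1.
  assert (Hbb : B <= b) by (pose proof (Rmax_l B (INR N1)); lra).
  assert (Rabs (RInt h b (INR n')) <= eta / 4).
  { eapply Rle_trans; [apply (tail_bound h phi); auto; lra|]. apply HB; lra. }
  rewrite <- (RInt_ChaslesR h 0 b (INR n')) in HN1 by (apply ex_RInt_cont; auto).
  replace (RInt h 0 b - l) with ((RInt h 0 b + RInt h b (INR n') - l) - RInt h b (INR n')) by ring.
  eapply Rle_lt_trans; [apply Rabs_triang|]. rewrite Rabs_Ropp. lra.
Qed.
Definition clamp01 (x : R) := (Rabs x - Rabs (x - 1) + 1) / 2.

Lemma clamp01_le0 x : x <= 0 -> clamp01 x = 0.
Proof. intros. unfold clamp01. rewrite (Rabs_left1 x), (Rabs_left1 (x - 1)) by lra. field. Qed.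
Lemma clamp01_ge1 x : 1 <= x -> clamp01 x = 1.
Proof. intros. unfold clamp01. rewrite (Rabs_pos_eq x), (Rabs_pos_eq (x - 1)) by lra. field. Qed.
Lemma clamp01_mid x : 0 <= x <= 1 -> clamp01 x = x.
Proof. intros. unfold clamp01. rewrite (Rabs_pos_eq x), (Rabs_left1 (x - 1)) by lra. field. Qed.
Lemma clamp01_range x : 0 <= clamp01 x <= 1.
Proof.
  destruct (Rle_dec x 0). { rewrite clamp01_le0; lra. }
  destruct (Rle_dec 1 x). { rewrite clamp01_ge1; lra. }
  rewrite clamp01_mid; lra.
Qed.
Lemma clamp01_pos x : 0 < clamp01 x -> 0 < x.
Proof. intros H. destruct (Rle_dec x 0); [rewrite clamp01_le0 in H; lra|lra]. Qed.
Lemma clamp01_cont (f : R -> R) t : continuous f t -> continuous (fun s => clamp01 (f s)) t.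
Proof.
  intros H. unfold clamp01.
  apply (continuous_ext (fun s => / 2 * (Rabs (f s) - Rabs (f s - 1) + 1))); [intros; unfold Rdiv; Rring|].
  apply C_mult; [apply C_const|]. apply C_plus; [|apply C_const]. apply C_minus; apply C_abs; auto.
  apply C_minus; auto; apply C_const.
Qed.

Definition mn (x y : R) := (x + y - Rabs (x - y)) / 2.
Lemma mn_le_l x y : mn x y <= x.
Proof. unfold mn. pose proof (Rle_abs (-(x - y))). rewrite Rabs_Ropp in H. lra. Qed.
Lemma mn_le_r x y : mn x y <= y.
Proof. unfold mn. pose proof (Rle_abs (x - y)). lra. Qed.
Lemma mn_ge x y z : z <= x -> z <= y -> z <= mn x y.
Proof. intros. unfold mn. destruct (Rle_dec x y); [rewrite Rabs_left1 by lra|rewrite Rabs_pos_eq by lra]; lra. Qed.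

Definition trap (a b tau t : R) := clamp01 ((mn (t - a) (b - t) + tau) / tau).

Lemma trap_cont a b tau t : continuous (trap a b tau) t.
Proof.
  unfold trap. apply clamp01_cont. unfold mn.
  apply (continuous_ext (fun s => (/ 2 * ((s - a) + (b - s) - Rabs ((s - a) - (b - s))) + tau) * / tau)); [intros; unfold Rdiv; Rring|].
  apply C_mult; [|apply C_const]. apply C_plus; [|apply C_const]. apply C_mult; [apply C_const|].
  apply C_minus; [apply C_plus; apply C_minus; auto using C_id, C_const|apply C_abs; apply C_minus; apply C_minus; auto using C_id, C_const].
Qed.

Lemma trap_one a b tau t : 0 < tau -> a < t < b -> trap a b tau t = 1.
Proof.
  intros Ht Hab. unfold trap. apply clamp01_ge1. assert (0 <= mn (t - a) (b - t)) by (apply mn_ge; lra).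
  apply (Rmult_le_reg_r tau); auto. unfold Rdiv. rewrite Rmult_assoc, Rinv_l by lra. lra.
Qed.

Lemma trap_zero a b tau t : 0 < tau -> ~ (a - tau < t < b + tau) -> trap a b tau t = 0.
Proof.
  intros Ht Hn. unfold trap. apply clamp01_le0.
  assert (mn (t - a) (b - t) <= - tau).
  { destruct (Rle_dec t (a - tau)). - pose proof (mn_le_l (t - a) (b - t)). lra.
    - assert (b + tau <= t) by lra. pose proof (mn_le_r (t - a) (b - t)). lra. }
  unfold Rdiv. apply Rmult_le_0_r; [lra|]. apply Rlt_le, Rinv_0_lt_compat; lra.
Qed.

Lemma support_int (psi : R -> R) c d b : (forall t, continuous psi t) -> (forall t, 0 <= psi t <= 1) ->
  (forall t, ~ (c < t < d) -> psi t = 0) -> c <= d -> 0 <= b -> RInt psi 0 b <= d - c.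
Proof.
  intros Hc Hr Hz Hcd Hb.
  set (m := Rmin 0 c). set (M := Rmax b d).
  assert (m <= 0) by apply Rmin_l. assert (m <= c) by apply Rmin_r. assert (b <= M) by apply Rmax_l. assert (d <= M) by apply Rmax_r.
  assert (Ex : forall x y, ex_RInt psi x y) by (intros; apply ex_RInt_cont; auto).
  assert (Hpos : forall x y, x <= y -> 0 <= RInt psi x y) by (intros; apply RInt_ge0; auto; intros; apply Hr).
  assert (HI1 : RInt psi 0 b <= RInt psi m M).
  { rewrite <- (RInt_ChaslesR psi m 0 M), <- (RInt_ChaslesR psi 0 b M) by auto.
    pose proof (Hpos m 0 ltac:(lra)). pose proof (Hpos b M ltac:(lra)). lra. }
  assert (HI2 : RInt psi m c = 0).
  { rewrite (RInt_ext _ (fun _ => 0)). rewrite RInt_constR; Rring.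
    intros x Hx. rewrite Rmin_left, Rmax_right in Hx by lra. apply Hz. lra. }
  assert (HI3 : RInt psi d M = 0).
  { rewrite (RInt_ext _ (fun _ => 0)). rewrite RInt_constR; Rring.
    intros x Hx. rewrite Rmin_left, Rmax_right in Hx by lra. apply Hz. lra. }
  assert (HI4 : RInt psi c d <= d - c).
  { apply Rle_trans with (RInt (fun _ => 1) c d); [apply RInt_leR; auto; [apply ex_RInt_const|intros; apply Hr]|].
    rewrite RInt_constR. lra. }
  rewrite <- (RInt_ChaslesR psi m c M), <- (RInt_ChaslesR psi c d M) in HI1 by auto. lra.
Qed.

Lemma sumN_sum_f n g : sumN (S n) g = sum_f_R0 g n.
Proof. induction n. - rewrite sumN_S, sumN_0. simpl. ring. - rewrite sumN_S, IHn. simpl. ring. Qed.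

Lemma finite_subcover (rho : R -> R) (a b : nat -> R) bb theta :
  (forall t, continuous rho t) -> 0 <= bb -> 0 < theta ->
  (forall t, 0 <= t <= bb -> theta <= rho t -> exists n, a n < t < b n) ->
  exists N0, forall t, 0 <= t <= bb -> theta <= rho t -> exists n, (n <= N0)%nat /\ a n < t < b n.
Proof.
  intros Hc Hbb Hth Hcov. apply Classical_Prop.NNPP. intros Hn.
  assert (Hall : forall N0, exists t, (0 <= t <= bb /\ theta <= rho t) /\ forall n, (n <= N0)%nat -> ~ (a n < t < b n)).
  { intros N0. apply Classical_Prop.NNPP. intros Hn2. apply Hn. exists N0. intros t Ht Hr.
    apply Classical_Prop.NNPP. intros Hn3. apply Hn2. exists t. split; [auto|]. intros n Hn4 Hin. apply Hn3. exists n. auto. }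
  set (un := fun N0 => epsilon (inhabits 0) (fun t => (0 <= t <= bb /\ theta <= rho t) /\ forall n, (n <= N0)%nat -> ~ (a n < t < b n))).
  assert (Hun : forall N0, (0 <= un N0 <= bb /\ theta <= rho (un N0)) /\ forall n, (n <= N0)%nat -> ~ (a n < un N0 < b n)).
  { intros N0. unfold un. apply epsilon_spec. apply Hall. }
  destruct (Bolzano_Weierstrass un (fun c => 0 <= c <= bb) (compact_P3 0 bb)) as [l Hl].
  { intros; apply Hun. }
  assert (Hnear : forall delta, 0 < delta -> forall N, exists p, (N <= p)%nat /\ Rabs (un p - l) < delta).
  { intros delta Hd N. destruct (Hl (disc l (mkposreal delta Hd)) N) as [p [Hp Hv]].
    - exists (mkposreal delta Hd). intros x Hx. exact Hx.
    - exists p. auto. }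
  assert (Hl0 : 0 <= l).
  { apply Rnot_lt_le. intros Hlt. destruct (Hnear (- l) ltac:(lra) O) as [p [_ Hp]].
    destruct (Hun p) as [[Hp1 _] _]. pose proof (Rle_abs (un p - l)). lra. }
  assert (Hlb : l <= bb).
  { apply Rnot_lt_le. intros Hlt. destruct (Hnear (l - bb) ltac:(lra) O) as [p [_ Hp]].
    destruct (Hun p) as [[Hp1 _] _]. pose proof (Rle_abs (-(un p - l))). rewrite Rabs_Ropp in H. lra. }
  assert (Hrl : theta <= rho l).
  { apply Rnot_lt_le. intros Hlt.
    destruct (cont_eps_inv rho l (Hc l) (theta - rho l) ltac:(lra)) as [d [Hd Hy]].
    destruct (Hnear d Hd O) as [p [_ Hp]]. specialize (Hy _ Hp).
    destruct (Hun p) as [[_ Hp2] _]. pose proof (Rle_abs (rho (un p) - rho l)). lra. }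
  destruct (Hcov l (conj Hl0 Hlb) Hrl) as [m Hm].
  destruct (Hnear (Rmin (l - a m) (b m - l)) ltac:(apply Rmin_pos; lra) m) as [p [Hp Hpl]].
  destruct (Hun p) as [_ Hp2]. apply (Hp2 m Hp).
  pose proof (Rmin_l (l - a m) (b m - l)). pose proof (Rmin_r (l - a m) (b m - l)).
  pose proof (Rle_abs (un p - l)). pose proof (Rle_abs (-(un p - l))). rewrite Rabs_Ropp in H2. lra.
Qed.

Lemma U_lemma (rho : R -> R) (A : R -> Prop) m bb : (forall t, continuous rho t) -> (forall t, 0 <= rho t <= 1) ->
  (forall t, 0 <= t <= bb -> 0 < rho t -> A t) -> outer_le A m -> 0 <= bb ->
  forall zeta, 0 < zeta -> RInt rho 0 bb <= m + zeta.
Proof.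
  intros Hc Hr HA Hout Hbb zeta Hz.
  destruct (Hout (zeta / 3) ltac:(lra)) as [a [b [Hab [Hcov Hsum]]]].
  set (theta := zeta / (3 * (bb + 1))).
  assert (Hth : 0 < theta) by (unfold theta; apply Rdiv_lt_0_compat; lra).
  destruct (finite_subcover rho a b bb theta Hc Hbb Hth) as [N0 HN0].
  { intros t Ht Hr2. apply Hcov. apply HA; auto. lra. }
  set (tau := zeta / (6 * (INR N0 + 1))).
  assert (Htau : 0 < tau) by (unfold tau; apply Rdiv_lt_0_compat; [lra|pose proof (pos_INR N0); lra]).
  set (g := fun t => theta + sumN (S N0) (fun n => trap (a n) (b n) tau t)).
  assert (Hg : forall t, continuous g t).
  { intros t. apply C_plus; [apply C_const|]. apply C_sumN. intros; apply trap_cont. }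
  assert (Hle : RInt rho 0 bb <= RInt g 0 bb).
  { apply RInt_leR; auto; try (apply ex_RInt_cont; auto). intros t Ht. unfold g.
    destruct (Rlt_le_dec (rho t) theta) as [Hlt|Hge].
    - assert (0 <= sumN (S N0) (fun n => trap (a n) (b n) tau t)) by (apply sumN_nonneg; intros; unfold trap; apply clamp01_range). lra.
    - destruct (HN0 t Ht Hge) as [n [Hn Hin]].
      assert (trap (a n) (b n) tau t <= sumN (S N0) (fun n => trap (a n) (b n) tau t)).
      { apply (term_le_sum (S N0) (fun n => trap (a n) (b n) tau t)); [intros; unfold trap; apply clamp01_range|lia]. }
      rewrite trap_one in H by auto. pose proof (Hr t). lra. }
  assert (Hgi : RInt g 0 bb <= theta * bb + sumN (S N0) (fun n => b n - a n + 2 * tau)).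
  { unfold g. rewrite RInt_plusR, RInt_constR, RInt_sumN.
    - apply Rplus_le_compat; [lra|]. apply sumN_le. intros n Hn.
      replace (b n - a n + 2 * tau) with ((b n + tau) - (a n - tau)) by ring.
      apply support_int; auto.
      + intros; apply trap_cont.
      + intros; unfold trap; apply clamp01_range.
      + intros; apply trap_zero; auto.
      + pose proof (Hab n). lra.
    - intros; apply ex_RInt_cont; intros; apply trap_cont.
    - apply ex_RInt_const.
    - apply ex_RInt_cont; intros; apply C_sumN; intros; apply trap_cont. }
  rewrite (sumN_plus (S N0) (fun n => b n - a n) (fun _ => 2 * tau)), sumN_sum_f in Hgi.
  rewrite (sumN_ext _ (fun _ => 2 * tau) (fun _ => 2 * tau * 1)), sumN_scal in Hgi by (intros; ring).
  assert (HS1 : sumN (S N0) (fun _ => 1) = INR (S N0)).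
  { clear. induction N0. - rewrite sumN_S, sumN_0. simpl. ring. - rewrite sumN_S, IHN0. rewrite (S_INR (S N0)). ring. }
  rewrite HS1 in Hgi. specialize (Hsum N0).
  assert (theta * bb <= zeta / 3).
  { unfold theta. apply Rle_trans with (zeta / (3 * (bb + 1)) * (bb + 1)); [apply Rmult_le_compat_l; [apply Rlt_le, Rdiv_lt_0_compat; lra|lra]|]. right; field; lra. }
  assert (2 * tau * INR (S N0) = zeta / 3) by (unfold tau; rewrite S_INR; field; pose proof (pos_INR N0); lra).
  lra.
Qed.
Lemma clamp01_mono x y : x <= y -> clamp01 x <= clamp01 y.
Proof.
  intros H. pose proof (clamp01_range x). pose proof (clamp01_range y).
  destruct (Rle_dec x 0). { rewrite (clamp01_le0 x); lra. }
  destruct (Rle_dec 1 y). { rewrite (clamp01_ge1 y); lra. }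
  rewrite (clamp01_mid x), (clamp01_mid y); lra.
Qed.

Lemma clamp_sum n : forall x, 0 <= x <= INR n + 1 -> x - 1 <= sumN n (fun k => clamp01 (x - INR (S k))).
Proof.
  induction n; intros x Hx.
  - rewrite sumN_0. simpl in Hx. lra.
  - rewrite sumN_S. pose proof (clamp01_range (x - INR (S n))).
    destruct (Rle_dec x (INR n + 1)) as [Hle|Hgt].
    + pose proof (IHn x ltac:(lra)). lra.
    + assert (H1 := IHn (INR n + 1) ltac:(pose proof (pos_INR n); lra)).
      assert (sumN n (fun k => clamp01 (INR n + 1 - INR (S k))) <= sumN n (fun k => clamp01 (x - INR (S k)))).
      { apply sumN_le. intros; apply clamp01_mono; lra. }
      rewrite S_INR in *. rewrite clamp01_mid by lra. lra.
Qed.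

Lemma LC (phi : R -> R) (Sp : R -> R -> Prop) : (forall t, continuous phi t) -> (forall t, 0 <= phi t) ->
  (forall t y, 0 <= t -> y < phi t -> Sp t y) -> finite_integral Sp -> BI phi.
Proof.
  intros Hc Hp HS [M HM]. exists M. intros b Hb. apply Rle_plus_epsilon. intros zeta Hz.
  set (delta := zeta / (2 * (b + 1))).
  assert (Hd : 0 < delta) by (unfold delta; apply Rdiv_lt_0_compat; lra).
  destruct (continuity_ab_maj phi 0 b Hb) as [Mx [HMx _]].
  { intros c _. apply continuity_pt_filterlim. apply Hc. }
  destruct (INR_unbounded (phi Mx / delta)) as [n Hn].
  destruct (HM delta Hd n) as [ms [Hout Hsum]].
  set (z' := zeta / (2 * delta * (INR n + 1))).
  assert (Hz' : 0 < z') by (unfold z'; apply Rdiv_lt_0_compat; [lra|pose proof (pos_INR n); nra]).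
  set (rho := fun k t => clamp01 (phi t / delta - INR (S k))).
  assert (Hrc : forall k t, continuous (rho k) t).
  { intros k t. unfold rho. apply clamp01_cont. apply C_minus; [|apply C_const].
    apply (continuous_ext (fun s => phi s * / delta)); [intros; reflexivity|]. apply C_mult; auto; apply C_const. }
  set (g := fun t => delta + delta * sumN n (fun k => rho k t)).
  assert (Hle : RInt phi 0 b <= RInt g 0 b).
  { assert (Hgc : forall t, continuous g t).
    { intros t. unfold g. apply C_plus; [apply C_const|]. apply C_mult; [apply C_const|]. apply C_sumN; auto. }
    apply RInt_leR; [auto|apply ex_RInt_cont; auto|apply ex_RInt_cont; auto|].
    intros t Ht. unfold g, rho.
    assert (Hx : 0 <= phi t / delta <= INR n + 1).
    { split; [apply Rmult_le_pos; [apply Hp|apply Rlt_le, Rinv_0_lt_compat; auto]|].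
      assert (phi t / delta <= phi Mx / delta) by (apply Rmult_le_compat_r; [apply Rlt_le, Rinv_0_lt_compat; auto|apply HMx; auto]). lra. }
    pose proof (clamp_sum n _ Hx).
    set (x := phi t / delta) in *. assert (Ex : phi t = delta * x) by (unfold x; field; lra). rewrite Ex. nra. }
  assert (Hgi : RInt g 0 b <= delta * b + delta * sumN n (fun k => ms k + z')).
  { unfold g. rewrite RInt_plusR, RInt_constR, RInt_scalR, RInt_sumN.
    - apply Rplus_le_compat; [lra|]. apply Rmult_le_compat_l; [lra|]. apply sumN_le. intros k Hk.
      apply (U_lemma (rho k) (fun t => 0 <= t /\ Sp t (INR (S k) * delta))); auto.
      + intros; unfold rho; apply clamp01_range.
      + intros t Ht Hpos. split; [lra|]. apply HS; [lra|]. unfold rho in Hpos. apply clamp01_pos in Hpos.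
        assert (INR (S k) < phi t / delta) by lra.
        apply (Rmult_lt_compat_r delta) in H; auto. unfold Rdiv in H. rewrite Rmult_assoc, Rinv_l in H by lra. lra.
    - intros; apply ex_RInt_cont; auto.
    - apply ex_RInt_cont; intros; apply C_sumN; auto.
    - apply ex_RInt_const.
    - apply ex_RInt_cont; intros; apply C_mult; [apply C_const|apply C_sumN; auto]. }
  rewrite sumN_plus in Hgi.
  rewrite (sumN_ext _ (fun _ => z') (fun _ => z' * 1)), sumN_scal in Hgi by (intros; ring).
  assert (HS1 : sumN n (fun _ => 1) = INR n).
  { clear. induction n. - reflexivity. - rewrite sumN_S, IHn, S_INR. ring. }
  rewrite HS1 in Hgi.
  assert (delta * b <= zeta / 2).
  { unfold delta. apply Rle_trans with (zeta / (2 * (b + 1)) * (b + 1)); [apply Rmult_le_compat_l; [apply Rlt_le, Rdiv_lt_0_compat; lra|lra]|]. right; field; lra. }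
  assert (delta * (z' * INR n) <= zeta / 2).
  { unfold z'. pose proof (pos_INR n).
    replace (delta * (zeta / (2 * delta * (INR n + 1)) * INR n)) with (zeta / 2 * (INR n / (INR n + 1))) by (field; lra).
    assert (INR n / (INR n + 1) <= 1) by (apply Rmult_le_reg_r with (INR n + 1); [lra|]; unfold Rdiv; rewrite Rmult_assoc, Rinv_l; lra).
    nra. }
  nra.
Qed.
Definition dlt (a b : nat) : R := if Nat.eqb a b then 1 else 0.

Lemma trans_neg N K e k m : (k < N)%nat -> (m < N)%nat ->
  trans N K (- e) k m = trans N (fun a b => - K a b) e k m.
Proof.
  intros Hk Hm.
  assert (H := ode_uniq N (fun a b => - K a b) (fun s l => trans N K (- s) l m - trans N (fun a b => - K a b) s l m)).
  cut ((fun s l => trans N K (- s) l m - trans N (fun a b => - K a b) s l m) e k = 0). { simpl; lra. }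
  apply H; auto.
  - intros l s Hl. eapply Dext; [intros; reflexivity| |apply Dminus; [apply (Dcomp (fun x => trans N K x l m) (fun s => - s) s (sumN N (fun k0 => K l k0 * trans N K (- s) k0 m)) (-1)); [apply trans_deriv; auto|apply Dneg]|apply trans_deriv; auto]].
    rewrite <- (sumN_scal N (-1)). rewrite <- sumN_minus. apply sumN_ext. intros; Rring.
  - intros l Hl. replace (- 0) with 0 by ring. rewrite !trans_0; auto. ring.
Qed.

Lemma trans_T1 N K m j : (m < N)%nat -> (j < N)%nat -> T1 (fun e => trans N K e m j) (dlt m j) (K m j).
Proof.
  intros Hm Hj. eapply T1_coef; [| |apply T1_of_deriv, trans_deriv; auto].
  - rewrite trans_0 by auto. reflexivity.
  - rewrite (sumN_ext N _ (fun l => K m l * (if Nat.eqb l j then 1 else 0))) by (intros; rewrite trans_0; auto).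
    apply sumN_delta'; auto.
Qed.

Lemma trans_T2 N K i k : (i < N)%nat -> (k < N)%nat ->
  T2 (fun e => trans N K e i k) (dlt i k) (K i k) (sumN N (fun l => K i l * K l k) / 2).
Proof.
  intros Hi Hk.
  assert (H1 : T1 (fun t => sumN N (fun l => K i l * trans N K t l k)) (sumN N (fun l => K i l * dlt l k)) (sumN N (fun l => K i l * K l k))).
  { apply (T1_sumN N (fun l t => K i l * trans N K t l k)). intros l Hl. apply T1_scal. apply trans_T1; auto. }
  eapply T2_coef; [| | |apply (T2_of_deriv (fun e => trans N K e i k) (fun t => sumN N (fun l => K i l * trans N K t l k)))].
  - rewrite trans_0 by auto. reflexivity.
  - rewrite (sumN_ext N _ (fun l => K i l * (if Nat.eqb l k then 1 else 0))) by (intros; rewrite trans_0; auto).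
    apply sumN_delta'; auto.
  - reflexivity.
  - intros; apply trans_deriv; auto.
  - intros t. apply C_sumN. intros l Hl. apply C_mult; [apply C_const|apply trans_cont; auto].
  - eapply T1_coef; [| |exact H1]; [|reflexivity]. apply sumN_ext. intros l Hl. rewrite trans_0 by auto. reflexivity.
Qed.

Lemma BI_sumN n (F : nat -> R -> R) : (forall j t, (j < n)%nat -> continuous (F j) t) ->
  (forall j, (j < n)%nat -> BI (F j)) -> BI (fun t => sumN n (fun j => F j t)).
Proof.
  induction n; intros Hc HB.
  - exists 0. intros b Hb. rewrite (RInt_ext _ (fun _ => 0)) by (intros; reflexivity). rewrite RInt_constR. lra.
  - destruct IHn as [M1 H1]. { intros; apply Hc; lia. } { intros; apply HB; lia. }
    destruct (HB n ltac:(lia)) as [M2 H2]. exists (M1 + M2). intros b Hb.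
    rewrite (RInt_ext _ (fun t => sumN n (fun j => F j t) + F n t)) by (intros; apply sumN_S).
    rewrite RInt_plusR.
    + pose proof (H1 b Hb). pose proof (H2 b Hb). lra.
    + apply ex_RInt_cont. intros; apply C_sumN; intros; apply Hc; lia.
    + apply ex_RInt_cont. intros; apply Hc; lia.
Qed.

Lemma normN_nonneg N q : 0 <= normN N q.
Proof. unfold normN. apply sumN_nonneg. intros; apply Rabs_pos. Qed.

Lemma BI_of_condI N D (ff : R -> nat -> (nat -> R) -> R) K (gg : nat -> R -> R) :
  condI N D ff -> (forall j, (j < N)%nat -> D j (K j)) -> (forall j t, (j < N)%nat -> continuous (gg j) t) ->
  (forall j t, (j < N)%nat -> 0 <= t -> gg j t = ff t j (K j)) ->
  BI (fun t => sumN N (fun j => Rabs (gg j t))).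
Proof.
  intros HI HDK Hc Heq. apply BI_sumN.
  - intros; apply C_abs; auto.
  - intros j Hj. pose proof (normN_nonneg N (K j)).
    apply (LC _ (fun t y => exists i q, (i < N)%nat /\ D i q /\ normN N q <= normN N (K j) + 1 /\ y < Rabs (ff t i q)) (fun t => C_abs _ t (Hc j t Hj)) (fun t => Rabs_pos _)).
    + intros t y Ht Hy. exists j, (K j). repeat split; auto; [lra|]. rewrite <- Heq; auto.
    + apply HI. lra.
Qed.

Lemma conv_general N K (gg : nat -> R -> R) (ff : R -> nat -> (nat -> R) -> R) m :
  genQ N K -> (m < N)%nat -> (forall j t, (j < N)%nat -> continuous (gg j) t) ->
  (forall j t, (j < N)%nat -> 0 <= t -> gg j t = ff t j (K j)) ->
  BI (fun t => sumN N (fun j => Rabs (gg j t))) ->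
  ImpConv (fun t => sumN N (fun j => trans N K t m j * gg j t)) (Fval N ff K m).
Proof.
  intros HG Hm Hc Heq HB.
  destruct (ImpConv_exists (fun t => sumN N (fun j => trans N K t m j * gg j t)) (fun t => sumN N (fun j => Rabs (gg j t)))) as [l Hl].
  - intros t. apply C_sumN. intros j Hj. apply C_mult; [apply trans_cont; auto|auto].
  - intros t. apply C_sumN. intros j Hj. apply C_abs; auto.
  - intros t Ht. eapply Rle_trans; [apply sumN_abs|]. apply sumN_le. intros j Hj. rewrite Rabs_mult.
    pose proof (trans_le1 N K t m j HG Ht Hm Hj). pose proof (Rabs_pos (gg j t)). pose proof (Rabs_pos (trans N K t m j)). nra.
  - auto.
  - assert (Hl2 : ImpConv (fun t => sumN N (fun j => trans N K t m j * ff t j (K j))) l).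
    { eapply ImpConv_ext; [|exact Hl]. intros t Ht. apply sumN_ext. intros j Hj. rewrite Heq; auto; lra. }
    unfold Fval. rewrite (int0inf_eq _ _ Hl2). exact Hl.
Qed.
Lemma ibp N K (gg gd : nat -> R -> R) (F : nat -> R) (Gk : R) k :
  genQ N K -> (k < N)%nat ->
  (forall j t, (j < N)%nat -> is_derive (gg j) t (gd j t)) -> (forall j t, (j < N)%nat -> continuous (gd j) t) ->
  BI (fun t => sumN N (fun j => Rabs (gg j t))) ->
  (forall m, (m < N)%nat -> ImpConv (fun t => sumN N (fun j => trans N K t m j * gg j t)) (F m)) ->
  ImpConv (fun t => sumN N (fun j => trans N K t k j * gd j t)) Gk ->
  Gk = - gg k 0 - sumN N (fun l => K k l * F l).
Proof.
  intros HG Hk Hd Hdc HB HF HGk.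
  set (beta := fun t => sumN N (fun j => trans N K t k j * gg j t)).
  set (beta' := fun t => sumN N (fun l => K k l * sumN N (fun j => trans N K t l j * gg j t)) + sumN N (fun j => trans N K t k j * gd j t)).
  assert (Hgc : forall j t, (j < N)%nat -> continuous (gg j) t) by (intros; eapply D_cont; apply Hd; auto).
  assert (Hder : forall t, is_derive beta t (beta' t)).
  { intros t. unfold beta, beta'.
    eapply Dext; [intros; reflexivity| |apply (D_sumN N (fun j t => trans N K t k j * gg j t) (fun j t => sumN N (fun l => K k l * trans N K t l j) * gg j t + trans N K t k j * gd j t))].
    - rewrite sumN_plus. f_equal. rewrite (sumN_ext N (fun l => K k l * sumN N (fun j => trans N K t l j * gg j t)) (fun l => sumN N (fun j => K k l * (trans N K t l j * gg j t)))) by (intros; rewrite sumN_scal; reflexivity).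
      rewrite sumN_swap. apply sumN_ext. intros j Hj. rewrite <- sumN_scal_r. apply sumN_ext. intros; ring.
    - intros j Hj. apply Dmult; [apply trans_deriv; auto|apply Hd; auto]. }
  assert (Hc' : forall t, continuous beta' t).
  { intros t. unfold beta'. apply C_plus; apply C_sumN; intros; [apply C_mult; [apply C_const|apply C_sumN; intros; apply C_mult; [apply trans_cont; auto|apply Hgc; auto]]|apply C_mult; [apply trans_cont; auto|apply Hdc; auto]]. }
  set (L := sumN N (fun l => K k l * F l) + Gk).
  assert (HIC : ImpConv beta' L).
  { unfold beta', L. apply ImpConv_plus; auto. apply (ImpConv_sumN N (fun l t => K k l * sumN N (fun j => trans N K t l j * gg j t)) (fun l => K k l * F l)).
    intros l Hl. apply ImpConv_scal. apply HF; auto. }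
  assert (Hint : forall b, RInt beta' 0 b = beta b - beta 0).
  { intros b. apply is_RInt_unique. assert (H := is_RInt_derive (V:=R_CompleteNormedModule) beta beta' 0 b). apply H; intros; auto. }
  assert (Hb0 : beta 0 = gg k 0).
  { unfold beta. rewrite (sumN_ext N _ (fun j => (if Nat.eqb k j then 1 else 0) * gg j 0)) by (intros; rewrite trans_0; auto).
    apply sumN_delta; auto. }
  assert (Hbnd : forall t, 0 <= t -> Rabs (beta t) <= sumN N (fun j => Rabs (gg j t))).
  { intros t Ht. unfold beta. eapply Rle_trans; [apply sumN_abs|]. apply sumN_le. intros j Hj. rewrite Rabs_mult.
    pose proof (trans_le1 N K t k j HG Ht Hk Hj). pose proof (Rabs_pos (gg j t)). pose proof (Rabs_pos (trans N K t k j)). nra. }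
  cut (gg k 0 + L = 0). { unfold L. lra. }
  apply Classical_Prop.NNPP. intros Hne.
  set (c := Rabs (gg k 0 + L)). assert (Hc0 : 0 < c) by (apply Rabs_pos_lt; auto).
  destruct (HIC (c / 2) ltac:(lra)) as [B [HB0 HBb]].
  destruct HB as [M HM].
  set (Phi := fun t => sumN N (fun j => Rabs (gg j t))).
  assert (HPc : forall t, continuous Phi t) by (intros; apply C_sumN; intros; apply C_abs; auto).
  assert (HPp : forall t, 0 <= t -> 0 <= Phi t) by (intros; apply sumN_nonneg; intros; apply Rabs_pos).
  assert (Hlow : forall t, B <= t -> c / 2 <= Phi t).
  { intros t Ht. destruct (HBb t Ht) as [_ Hlt]. rewrite Hint, Hb0 in Hlt.
    pose proof (Hbnd t ltac:(lra)).
    assert (c <= Rabs (beta t - gg k 0 - L) + Rabs (beta t)).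
    { unfold c. replace (gg k 0 + L) with (-(beta t - gg k 0 - L) + beta t) by ring.
      eapply Rle_trans; [apply Rabs_triang|]. rewrite Rabs_Ropp. lra. }
    unfold Phi. lra. }
  set (T := 2 * (Rabs M + 1) / c).
  assert (HT : 0 < T) by (unfold T; apply Rdiv_lt_0_compat; pose proof (Rabs_pos M); lra).
  specialize (HM (B + T) ltac:(lra)). fold Phi in HM.
  rewrite <- (RInt_ChaslesR Phi 0 B (B + T)) in HM by (apply ex_RInt_cont; auto).
  assert (0 <= RInt Phi 0 B) by (apply RInt_ge0; auto; [apply ex_RInt_cont; auto|intros; apply HPp; lra]).
  assert (RInt (fun _ => c / 2) B (B + T) <= RInt Phi B (B + T)).
  { apply RInt_leR; [lra|apply ex_RInt_const|apply ex_RInt_cont; auto|]. intros; apply Hlow; lra. }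
  rewrite RInt_constR in H0. replace (B + T - B) with T in H0 by ring.
  assert (T * (c / 2) = Rabs M + 1) by (unfold T; field; lra).
  pose proof (Rle_abs M). lra.
Qed.
Lemma plus_minus_l (a c : R) : c = a + c - a.
Proof. ring. Qed.

Lemma Fconcat_eq N (f : R -> nat -> (nat -> R) -> R) Q Qs e i (gg hh : nat -> R -> R) (F : nat -> R) :
  (i < N)%nat -> 0 < e -> (forall j t, (j < N)%nat -> continuous (gg j) t) -> (forall j t, (j < N)%nat -> continuous (hh j) t) ->
  (forall j t, (j < N)%nat -> 0 <= t -> gg j t = f t j (Qs j)) -> (forall j t, (j < N)%nat -> 0 <= t -> hh j t = f t j (Q j)) ->
  (forall m, (m < N)%nat -> ImpConv (fun t => sumN N (fun j => trans N Qs t m j * gg j t)) (F m)) ->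
  Fconcat N f Q Qs e i = RInt (fun t => sumN N (fun j => trans N Q t i j * hh j t)) 0 e
    + sumN N (fun m => sumN N (fun k => trans N Q e i k * trans N Qs (- e) k m) *
         (F m - RInt (fun t => sumN N (fun j => trans N Qs t m j * gg j t)) 0 e)).
Proof.
  intros Hi He Hgc Hhc Hg Hh HF.
  set (W := fun m => sumN N (fun k => trans N Q e i k * trans N Qs (- e) k m)).
  set (psiR := fun t => sumN N (fun j => trans N Q t i j * hh j t)).
  set (uG := fun m t => sumN N (fun j => trans N Qs t m j * gg j t)).
  set (vG := fun t => sumN N (fun m => W m * uG m t)).
  assert (HuGc : forall m t, (m < N)%nat -> continuous (uG m) t).
  { intros; unfold uG; apply C_sumN; intros; apply C_mult; [apply trans_cont; auto|auto]. }
  assert (HvGc : forall t, continuous vG t) by (intros; unfold vG; apply C_sumN; intros; apply C_mult; [apply C_const|auto]).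
  assert (HpRc : forall t, continuous psiR t) by (intros; unfold psiR; apply C_sumN; intros; apply C_mult; [apply trans_cont; auto|auto]).
  assert (HvI : ImpConv vG (sumN N (fun m => W m * F m))).
  { unfold vG. apply (ImpConv_sumN N (fun m t => W m * uG m t)). intros m Hm. apply ImpConv_scal. apply HF; auto. }
  set (Fi := fun t => if Rle_dec t e then sumN N (fun j => trans N Q t i j * f t j (Q j))
    else sumN N (fun j => sumN N (fun k => trans N Q e i k * trans N Qs (t - e) k j) * f t j (Qs j))).
  assert (H1 : forall t, 0 < t <= e -> Fi t = psiR t).
  { intros t Ht. unfold Fi, psiR. destruct (Rle_dec t e); [|lra]. apply sumN_ext. intros j Hj. rewrite Hh; auto; lra. }
  assert (H2 : forall t, e < t -> Fi t = vG t).
  { intros t Ht. unfold Fi, vG, uG, W. destruct (Rle_dec t e); [lra|].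
    rewrite (sumN_ext N _ (fun j => sumN N (fun m => sumN N (fun k => trans N Q e i k * trans N Qs (- e) k m) * trans N Qs t m j) * gg j t)).
    2:{ intros j Hj. rewrite Hg by (auto; lra). f_equal.
        rewrite (sumN_ext N (fun k => trans N Q e i k * trans N Qs (t - e) k j) (fun k => sumN N (fun m => trans N Q e i k * (trans N Qs (- e) k m * trans N Qs t m j)))).
        2:{ intros k Hk. replace (t - e) with (- e + t) by ring. rewrite trans_semi by auto. rewrite <- sumN_scal. reflexivity. }
        rewrite sumN_swap. apply sumN_ext. intros m Hm. rewrite <- sumN_scal_r. apply sumN_ext. intros; ring. }
    rewrite (sumN_ext N _ (fun j => sumN N (fun m => sumN N (fun k => trans N Q e i k * trans N Qs (- e) k m) * (trans N Qs t m j * gg j t)))).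
    2:{ intros j Hj. rewrite <- sumN_scal_r. apply sumN_ext. intros; ring. }
    rewrite sumN_swap. apply sumN_ext. intros m Hm. rewrite sumN_scal. reflexivity. }
  assert (HFI : ImpConv Fi (RInt psiR 0 e + sumN N (fun m => W m * (F m - RInt (uG m) 0 e)))).
  { intros eta Heta. destruct (HvI eta Heta) as [B [HB0 HB]]. exists (Rmax B e). split; [pose proof (Rmax_l B e); lra|].
    intros b Hb. assert (HBb : B <= b) by (pose proof (Rmax_l B e); lra). assert (Heb : e <= b) by (pose proof (Rmax_r B e); lra).
    destruct (HB b HBb) as [Ex Lt].
    assert (E1 : ex_RInt Fi 0 e).
    { apply (ex_RInt_ext psiR); [|apply ex_RInt_cont; auto]. intros x Hx. rewrite Rmin_left, Rmax_right in Hx by lra. symmetry; apply H1; lra. }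
    assert (E2 : ex_RInt Fi e b).
    { apply (ex_RInt_ext vG); [|apply ex_RInt_cont; auto]. intros x Hx. rewrite Rmin_left, Rmax_right in Hx by lra. symmetry; apply H2; lra. }
    split; [apply (ex_RInt_Chasles Fi 0 e b); auto|].
    rewrite <- (RInt_ChaslesR Fi 0 e b) by auto.
    rewrite (RInt_ext Fi psiR 0 e) by (intros x Hx; rewrite Rmin_left, Rmax_right in Hx by lra; apply H1; lra).
    rewrite (RInt_ext Fi vG e b) by (intros x Hx; rewrite Rmin_left, Rmax_right in Hx by lra; apply H2; lra).
    assert (Hsplit : RInt vG e b = RInt vG 0 b - RInt vG 0 e).
    { rewrite <- (RInt_ChaslesR vG 0 e b) by (apply ex_RInt_cont; auto). apply plus_minus_l. }
    assert (Hve : RInt vG 0 e = sumN N (fun m => W m * RInt (uG m) 0 e)).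
    { unfold vG. rewrite RInt_sumN.
      - apply sumN_ext. intros m Hm. apply RInt_scalR. apply ex_RInt_cont; auto.
      - intros m Hm. apply ex_RInt_scalR, ex_RInt_cont; auto. }
    rewrite Hsplit, Hve.
    rewrite (sumN_ext N (fun m => W m * (F m - RInt (uG m) 0 e)) (fun m => W m * F m - W m * RInt (uG m) 0 e)) by (intros; ring).
    rewrite sumN_minus.
    replace (RInt psiR 0 e + (RInt vG 0 b - sumN N (fun m => W m * RInt (uG m) 0 e)) -
      (RInt psiR 0 e + (sumN N (fun m => W m * F m) - sumN N (fun m => W m * RInt (uG m) 0 e))))
      with (RInt vG 0 b - sumN N (fun m => W m * F m)) by ring. exact Lt. }
  transitivity (int0inf Fi); [reflexivity|]. rewrite (int0inf_eq _ _ HFI). reflexivity.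
Qed.
Lemma sumN_dlt_l n i x : (i < n)%nat -> sumN n (fun k => dlt i k * x k) = x i.
Proof. intros. unfold dlt. apply sumN_delta; auto. Qed.
Lemma sumN_dlt_r n m x : (m < n)%nat -> sumN n (fun k => x k * dlt k m) = x m.
Proof. intros. unfold dlt. apply sumN_delta'; auto. Qed.

Lemma W_T2 N Q Qs i m : (i < N)%nat -> (m < N)%nat ->
  T2 (fun e => sumN N (fun k => trans N Q e i k * trans N Qs (- e) k m))
     (dlt i m) (Q i m - Qs i m)
     (sumN N (fun l => Qs i l * Qs l m) / 2 - sumN N (fun k => Q i k * Qs k m) + sumN N (fun l => Q i l * Q l m) / 2).
Proof.
  intros Hi Hm. eapply T2_coef; [| | |apply (T2_sumN N (fun k e => trans N Q e i k * trans N Qs (- e) k m))].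
  4:{ intros k Hk. apply T2_mult; [apply trans_T2; auto|].
      eapply T2_ext; [intros; symmetry; apply trans_neg; auto|]. apply trans_T2; auto. }
  - apply (sumN_dlt_l N i (fun k => dlt k m)); auto.
  - rewrite sumN_plus, sumN_dlt_l, (sumN_dlt_r N m (fun k => Q i k)) by auto. ring.
  - rewrite !sumN_plus, sumN_dlt_l, (sumN_dlt_r N m (fun k => sumN N (fun l => Q i l * Q l k) / 2)) by auto.
    rewrite (sumN_ext N (fun l => - Qs i l * - Qs l m) (fun l => Qs i l * Qs l m)) by (intros; ring).
    rewrite (sumN_ext N (fun k => Q i k * - Qs k m) (fun k => -1 * (Q i k * Qs k m))) by (intros; ring).
    rewrite sumN_scal. ring.
Qed.

Lemma I_T2 N K (gg gd : nat -> R -> R) m : (m < N)%nat ->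
  (forall j t, (j < N)%nat -> continuous (gg j) t) -> (forall j, (j < N)%nat -> T1 (gg j) (gg j 0) (gd j 0)) ->
  T2 (fun e => RInt (fun t => sumN N (fun j => trans N K t m j * gg j t)) 0 e)
     0 (gg m 0) ((gd m 0 + sumN N (fun j => K m j * gg j 0)) / 2).
Proof.
  intros Hm Hc HT. apply T2_int.
  - intros e He. apply ex_RInt_cont. intros t. apply C_sumN. intros; apply C_mult; [apply trans_cont; auto|auto].
  - rewrite (sumN_ext N _ (fun j => dlt m j * gg j 0)) by (intros; rewrite trans_0; auto). apply sumN_dlt_l; auto.
  - eapply T1_coef; [| |apply (T1_sumN N (fun j t => trans N K t m j * gg j t))].
    3:{ intros j Hj. apply T1_mult; [apply trans_T1; auto|apply HT; auto]. }
    + apply sumN_dlt_l; auto.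
    + rewrite sumN_plus, sumN_dlt_l by auto. reflexivity.
Qed.
Lemma swapF N (X : nat -> R) (Y : nat -> nat -> R) (F : nat -> R) :
  sumN N (fun m => sumN N (fun l => X l * Y l m) * F m) = sumN N (fun l => X l * sumN N (fun m => Y l m * F m)).
Proof.
  rewrite (sumN_ext N _ (fun m => sumN N (fun l => X l * (Y l m * F m)))) by (intros; rewrite <- sumN_scal_r; apply sumN_ext; intros; ring).
  rewrite sumN_swap. apply sumN_ext. intros. rewrite sumN_scal. reflexivity.
Qed.

Lemma mone_minus (x y : R) : x + -1 * y = x - y.
Proof. ring. Qed.

Theorem mainTheorem3 (N : nat) (D : nat -> (nat -> R) -> Prop)
  (f ft : R -> nat -> (nat -> R) -> R)
  (HD : forall i q, (i < N)%nat -> D i q -> inE N i q)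
  (HI : condI N D f)
  (HC1 : forall i q, (i < N)%nat -> D i q ->
           C1_nonneg (fun t => f t i q) (fun t => ft t i q))
  (HIt : condI N D ft)
  (HR : condR N D f ft)
  (i : nat) (Q Qs : nat -> nat -> R)
  (Hi : (i < N)%nat) (HQ : inQ N D Q) (HQs : inQ N D Qs) :
  forall eta, 0 < eta -> exists delta, 0 < delta /\
    forall e, 0 < e < delta ->
      Rabs (Fval N f Qs i - Fconcat N f Q Qs e i
            - ((Gam N f Qs i (Qs i) - Gam N f Qs i (Q i)) * e
               + / 2 * (Lam N f ft Qs i Qs - Lam N f ft Qs i Q) * e ^ 2))
      <= eta * e ^ 2.
Proof.
  intros eta Heta.
  assert (HGs : genQ N Qs) by (apply inE_gen; intros; apply HD; auto).
  assert (HGq : genQ N Q) by (apply inE_gen; intros; apply HD; auto).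
  set (gg := fun j => gx (fun t => f t j (Qs j)) (fun t => ft t j (Qs j))).
  set (gd := fun j => gx' (fun t => ft t j (Qs j))).
  set (hh := fun j => gx (fun t => f t j (Q j)) (fun t => ft t j (Q j))).
  set (hd := fun j => gx' (fun t => ft t j (Q j))).
  assert (C1s : forall j, (j < N)%nat -> C1_nonneg (fun t => f t j (Qs j)) (fun t => ft t j (Qs j))) by (intros; apply HC1; auto).
  assert (C1q : forall j, (j < N)%nat -> C1_nonneg (fun t => f t j (Q j)) (fun t => ft t j (Q j))) by (intros; apply HC1; auto).
  assert (Hggd : forall j t, (j < N)%nat -> is_derive (gg j) t (gd j t)) by (intros; apply gx_deriv; auto).
  assert (Hhhd : forall j t, (j < N)%nat -> is_derive (hh j) t (hd j t)) by (intros; apply gx_deriv; auto).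
  assert (Hggc : forall j t, (j < N)%nat -> continuous (gg j) t) by (intros; apply gx_cont; auto).
  assert (Hhhc : forall j t, (j < N)%nat -> continuous (hh j) t) by (intros; apply gx_cont; auto).
  assert (Hgdc : forall j t, (j < N)%nat -> continuous (gd j) t) by (intros; apply (gx'_cont (fun t => f t j (Qs j))); auto).
  assert (Hgg : forall j t, (j < N)%nat -> 0 <= t -> gg j t = f t j (Qs j)) by (intros; apply gx_pos; auto).
  assert (Hhh : forall j t, (j < N)%nat -> 0 <= t -> hh j t = f t j (Q j)) by (intros; apply gx_pos; auto).
  assert (Hgd : forall j t, (j < N)%nat -> 0 <= t -> gd j t = ft t j (Qs j)) by (intros; apply gx'_pos; auto).
  assert (Hhd : forall j t, (j < N)%nat -> 0 <= t -> hd j t = ft t j (Q j)) by (intros; apply gx'_pos; auto).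
  assert (BIg : BI (fun t => sumN N (fun j => Rabs (gg j t)))) by (apply (BI_of_condI N D f Qs); auto).
  assert (BIgd : BI (fun t => sumN N (fun j => Rabs (gd j t)))) by (apply (BI_of_condI N D ft Qs); auto).
  set (F := fun m => Fval N f Qs m).
  assert (HF : forall m, (m < N)%nat -> ImpConv (fun t => sumN N (fun j => trans N Qs t m j * gg j t)) (F m)).
  { intros m Hm. apply conv_general; auto. }
  assert (HGv : forall m, (m < N)%nat -> ImpConv (fun t => sumN N (fun j => trans N Qs t m j * gd j t)) (Fval N ft Qs m)).
  { intros m Hm. apply conv_general; auto. }
  assert (Hibp : forall k, (k < N)%nat -> Fval N ft Qs k = - gg k 0 - sumN N (fun l => Qs k l * F l)).
  { intros k Hk. apply (ibp N Qs gg gd F); auto. }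
  assert (HTg : forall j, (j < N)%nat -> T1 (gg j) (gg j 0) (gd j 0)) by (intros; apply T1_of_deriv; auto).
  assert (HTh : forall j, (j < N)%nat -> T1 (hh j) (hh j 0) (hd j 0)) by (intros; apply T1_of_deriv; auto).
  set (w2 := fun m => sumN N (fun l => Qs i l * Qs l m) / 2 - sumN N (fun k => Q i k * Qs k m) + sumN N (fun l => Q i l * Q l m) / 2).
  set (Phi := fun e => F i + -1 * (RInt (fun t => sumN N (fun j => trans N Q t i j * hh j t)) 0 e
      + sumN N (fun m => sumN N (fun k => trans N Q e i k * trans N Qs (- e) k m) *
         (F m + -1 * RInt (fun t => sumN N (fun j => trans N Qs t m j * gg j t)) 0 e)))).
  assert (HT : T2 Phi (F i + -1 * (0 + sumN N (fun m => dlt i m * (F m + -1 * 0))))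
     (0 + -1 * (hh i 0 + sumN N (fun m => dlt i m * (0 + -1 * gg m 0) + (Q i m - Qs i m) * (F m + -1 * 0))))
     (0 + -1 * ((hd i 0 + sumN N (fun j => Q i j * hh j 0)) / 2 +
        sumN N (fun m => dlt i m * (0 + -1 * ((gd m 0 + sumN N (fun j => Qs m j * gg j 0)) / 2)) + (Q i m - Qs i m) * (0 + -1 * gg m 0) + w2 m * (F m + -1 * 0))))).
  { unfold Phi. apply T2_plus; [apply T2_const|]. apply T2_scal. apply T2_plus.
    - apply I_T2; auto.
    - apply (T2_sumN N (fun m e => sumN N (fun k => trans N Q e i k * trans N Qs (- e) k m) *
         (F m + -1 * RInt (fun t => sumN N (fun j => trans N Qs t m j * gg j t)) 0 e))
         (fun m => dlt i m * (F m + -1 * 0))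
         (fun m => dlt i m * (0 + -1 * gg m 0) + (Q i m - Qs i m) * (F m + -1 * 0))
         (fun m => dlt i m * (0 + -1 * ((gd m 0 + sumN N (fun j => Qs m j * gg j 0)) / 2)) + (Q i m - Qs i m) * (0 + -1 * gg m 0) + w2 m * (F m + -1 * 0))).
      intros m Hm. apply T2_mult; [apply W_T2; auto|]. apply T2_plus; [apply T2_const|]. apply T2_scal. apply I_T2; auto. }
  destruct (HT eta Heta) as [delta [Hdelta Hb]]. exists delta. split; auto.
  intros e He. specialize (Hb e He).
  rewrite (Fconcat_eq N f Q Qs e i gg hh F) by (auto; lra).
  assert (E0 : F i + -1 * (0 + sumN N (fun m => dlt i m * (F m + -1 * 0))) = 0).
  { rewrite (sumN_dlt_l N i (fun m => F m + -1 * 0)) by auto. ring. }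
  set (bQh0 := sumN N (fun j => Q i j * hh j 0)).
  set (bQg0 := sumN N (fun j => Q i j * gg j 0)).
  set (bQsg0 := sumN N (fun j => Qs i j * gg j 0)).
  set (bQF := sumN N (fun j => Q i j * F j)).
  set (bQsF := sumN N (fun j => Qs i j * F j)).
  set (aQsQs := sumN N (fun j => Qs i j * sumN N (fun m => Qs j m * F m))).
  set (aQQs := sumN N (fun j => Q i j * sumN N (fun m => Qs j m * F m))).
  set (aQQ := sumN N (fun j => Q i j * sumN N (fun m => Q j m * F m))).
  assert (E1 : 0 + -1 * (hh i 0 + sumN N (fun m => dlt i m * (0 + -1 * gg m 0) + (Q i m - Qs i m) * (F m + -1 * 0)))
     = gg i 0 - hh i 0 - bQF + bQsF).
  { rewrite sumN_plus, (sumN_dlt_l N i (fun m => 0 + -1 * gg m 0)) by auto.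
    rewrite (sumN_ext N (fun m => (Q i m - Qs i m) * (F m + -1 * 0)) (fun m => Q i m * F m - Qs i m * F m)) by (intros; ring).
    rewrite sumN_minus. unfold bQF, bQsF. ring. }
  assert (E2 : 0 + -1 * ((hd i 0 + bQh0) / 2 +
        sumN N (fun m => dlt i m * (0 + -1 * ((gd m 0 + sumN N (fun j => Qs m j * gg j 0)) / 2)) + (Q i m - Qs i m) * (0 + -1 * gg m 0) + w2 m * (F m + -1 * 0)))
     = - (hd i 0 + bQh0) / 2 + (gd i 0 + bQsg0) / 2 + bQg0 - bQsg0 - aQsQs / 2 + aQQs - aQQ / 2).
  { rewrite !sumN_plus, (sumN_dlt_l N i (fun m => 0 + -1 * ((gd m 0 + sumN N (fun j => Qs m j * gg j 0)) / 2))) by auto.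
    rewrite (sumN_ext N (fun m => (Q i m - Qs i m) * (0 + -1 * gg m 0)) (fun m => -1 * (Q i m * gg m 0) + Qs i m * gg m 0)) by (intros; ring).
    rewrite sumN_plus, sumN_scal.
    rewrite (sumN_ext N (fun m => w2 m * (F m + -1 * 0)) (fun m => / 2 * (sumN N (fun l => Qs i l * Qs l m) * F m) + -1 * (sumN N (fun k => Q i k * Qs k m) * F m) + / 2 * (sumN N (fun l => Q i l * Q l m) * F m))) by (intros; unfold w2; field).
    rewrite !sumN_plus, !sumN_scal, !(swapF N).
    fold aQsQs aQQs aQQ bQsg0 bQg0. field. }
  assert (Hgam : Gam N f Qs i (Qs i) - Gam N f Qs i (Q i) = gg i 0 - hh i 0 - bQF + bQsF).
  { unfold Gam, dot. rewrite Hgg, Hhh by (auto; lra).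
    change (sumN N (fun j => Qs i j * Fval N f Qs j)) with bQsF. change (sumN N (fun j => Q i j * Fval N f Qs j)) with bQF. ring. }
  assert (Hlam : / 2 * (Lam N f ft Qs i Qs - Lam N f ft Qs i Q) = - (hd i 0 + bQh0) / 2 + (gd i 0 + bQsg0) / 2 + bQg0 - bQsg0 - aQsQs / 2 + aQQs - aQQ / 2).
  { unfold Lam, Gam, dot. rewrite Hgd, Hhd by (auto; lra).
    rewrite (sumN_ext N (fun j => Qs i j * (2 * Fval N ft Qs j + (f 0 j (Qs j) + sumN N (fun j0 => Qs j j0 * Fval N f Qs j0))))
        (fun j => -1 * (Qs i j * gg j 0) + -1 * (Qs i j * sumN N (fun m => Qs j m * F m)))).
    2:{ intros j Hj. rewrite Hibp, Hgg by (auto; lra). change (sumN N (fun j0 => Qs j j0 * Fval N f Qs j0)) with (sumN N (fun m => Qs j m * F m)). ring. }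
    rewrite (sumN_ext N (fun j => Q i j * (2 * Fval N ft Qs j + (f 0 j (Q j) + sumN N (fun j0 => Q j j0 * Fval N f Qs j0))))
        (fun j => -2 * (Q i j * gg j 0) + -2 * (Q i j * sumN N (fun m => Qs j m * F m)) + (Q i j * hh j 0) + Q i j * sumN N (fun m => Q j m * F m))).
    2:{ intros j Hj. rewrite Hibp, Hhh by (auto; lra). change (sumN N (fun j0 => Q j j0 * Fval N f Qs j0)) with (sumN N (fun m => Q j m * F m)). ring. }
    rewrite !sumN_plus, !sumN_scal. fold bQh0 bQg0 bQsg0 aQsQs aQQs aQQ. field. }
  change (sumN N (fun j => Q i j * hh j 0)) with bQh0 in Hb.
  rewrite E0, E1, E2 in Hb. rewrite Hgam, Hlam.
  unfold Phi in Hb. fold F.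
  rewrite (sumN_ext N (fun m => sumN N (fun k => trans N Q e i k * trans N Qs (- e) k m) * (F m + -1 * RInt (fun t => sumN N (fun j => trans N Qs t m j * gg j t)) 0 e))
        (fun m => sumN N (fun k => trans N Q e i k * trans N Qs (- e) k m) * (F m - RInt (fun t => sumN N (fun j => trans N Qs t m j * gg j t)) 0 e))) in Hb
    by (intros; rewrite mone_minus; reflexivity).
  rewrite mone_minus in Hb.
  replace (0 + (gg i 0 - hh i 0 - bQF + bQsF) * e + (- (hd i 0 + bQh0) / 2 + (gd i 0 + bQsg0) / 2 + bQg0 - bQsg0 - aQsQs / 2 + aQQs - aQQ / 2) * e ^ 2)
    with ((gg i 0 - hh i 0 - bQF + bQsF) * e + (- (hd i 0 + bQh0) / 2 + (gd i 0 + bQsg0) / 2 + bQg0 - bQsg0 - aQsQs / 2 + aQQs - aQQ / 2) * e ^ 2) in Hb by ring.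
  exact Hb.
Qed.
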